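(* Let $f(z)=\sum_{k=0}^d\alpha_kz^k$ be a complex polynomial of degree $d\ge 2$, and consider $z'=f(z)$ as the real planar system $x'=P(x,y)$, $y'=Q(x,y)$ with $P=\operatorname{Re} f(x+iy)$, $Q=\operatorname{Im} f(x+iy)$. Let $p=(p_1,p_2)\in\mathbb{R}^2$, $\|p\|=1$, be a critical point at infinity, and let $\alpha\in\mathbb{R}$ be such that $(P_d(p_1,p_2),Q_d(p_1,p_2))^{\top}=\alpha\,(p_1,p_2)^{\top}$. Then $\alpha\neq 0$. Moreover, if $\alpha>0$ there is a solution $z^*$ of $z'=f(z)$ defined on a maximal interval $(t_{\min},t_{\max})$ with $t_{\max}<\infty$ that diverges to $p_\infty$ as $t\to t_{\max}^-$ (a positive separatrix ending at $p$); if $\alpha<0$ there is a solution with $t_{\min}>-\infty$ that diverges to $p_\infty$ as $t\to t_{\min}^+$ (a negative separatrix starting at $p$).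
   Context: $P_d,Q_d$ denote the homogeneous parts of degree $d$ of $P,Q$. A critical point at infinity is $p$ with $\|p\|=1$ and $p_1Q_d(p_1,p_2)-p_2P_d(p_1,p_2)=0$ (equivalently, $(P_d(p),Q_d(p))$ is a real multiple of $p$). A continuous curve $y(t)$ diverges to $p_\infty$ as $t\to t_{\max}^-$ if $\|y(t)\|\to\infty$ and $y(t)/\|y(t)\|\to p$. A trajectory $\gamma$ of $z'=f(z)$ is a positive (negative) separatrix if there is a point $z\in\gamma$ such that the maximal interval of existence of the solution starting at $z$ in positive (negative) time is finite. *)

(* Defs.v *)
From Stdlib Require Import Reals Lra.
Open Scope R_scope.

Definition Cx := (R * R)%type.
Definition cadd (z w : Cx) : Cx := (fst z + fst w, snd z + snd w).
Definition cmul (z w : Cx) : Cx :=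
  (fst z * fst w - snd z * snd w, fst z * snd w + snd z * fst w).
Fixpoint cpow (z : Cx) (n : nat) : Cx :=
  match n with O => (1, 0) | S m => cmul z (cpow z m) end.

Fixpoint cpoly (alpha : nat -> Cx) (d : nat) (z : Cx) : Cx :=
  match d with
  | O => alpha O
  | S m => cadd (cpoly alpha m z) (cmul (alpha (S m)) (cpow z (S m)))
  end.

Definition Pf (alpha : nat -> Cx) (d : nat) (x y : R) : R := fst (cpoly alpha d (x, y)).
Definition Qf (alpha : nat -> Cx) (d : nat) (x y : R) : R := snd (cpoly alpha d (x, y)).

(* Homogeneous parts of degree d of P and Q: the only degree-d contribution
   of f(x+iy) comes from alpha_d (x+iy)^d (the other terms have total degree < d). *)
Definition Pd (alpha : nat -> Cx) (d : nat) (x y : R) : R := fst (cmul (alpha d) (cpow (x, y) d)).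
Definition Qd (alpha : nat -> Cx) (d : nat) (x y : R) : R := snd (cmul (alpha d) (cpow (x, y) d)).

Definition cnorm (z : Cx) : R := sqrt (fst z ^ 2 + snd z ^ 2).

(* open intervals (lo, hi) with lo = None meaning -oo, hi = None meaning +oo *)
Definition in_int (lo hi : option R) (t : R) : Prop :=
  match lo with None => True | Some a => a < t end /\
  match hi with None => True | Some b => t < b end.

Definition is_solution (F : Cx -> Cx) (lo hi : option R) (z : R -> Cx) : Prop :=
  (exists t, in_int lo hi t) /\
  forall t, in_int lo hi t ->
    derivable_pt_lim (fun s => fst (z s)) t (fst (F (z t))) /\
    derivable_pt_lim (fun s => snd (z s)) t (snd (F (z t))).

Definition maximal_solution (F : Cx -> Cx) (lo hi : option R) (z : R -> Cx) : Prop :=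
  is_solution F lo hi z /\
  forall lo' hi' (w : R -> Cx),
    is_solution F lo' hi' w ->
    (forall t, in_int lo hi t -> in_int lo' hi' t) ->
    (forall t, in_int lo hi t -> w t = z t) ->
    (forall t, in_int lo' hi' t -> in_int lo hi t).

Definition diverges_left_of (lo : option R) (tmax : R) (z : R -> Cx) (p : Cx) : Prop :=
  (forall M, exists delta, delta > 0 /\
     forall t, in_int lo (Some tmax) t -> tmax - delta < t -> cnorm (z t) > M) /\
  (forall eps, eps > 0 -> exists delta, delta > 0 /\
     forall t, in_int lo (Some tmax) t -> tmax - delta < t ->
       cnorm (fst (z t) / cnorm (z t) - fst p, snd (z t) / cnorm (z t) - snd p) < eps).

Definition diverges_right_of (tmin : R) (hi : option R) (z : R -> Cx) (p : Cx) : Prop :=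
  (forall M, exists delta, delta > 0 /\
     forall t, in_int (Some tmin) hi t -> t < tmin + delta -> cnorm (z t) > M) /\
  (forall eps, eps > 0 -> exists delta, delta > 0 /\
     forall t, in_int (Some tmin) hi t -> t < tmin + delta ->
       cnorm (fst (z t) / cnorm (z t) - fst p, snd (z t) / cnorm (z t) - snd p) < eps).

(* Main.v *)
Require Import Defs.
From Stdlib Require Import Reals Lra Lia Psatz Classical ClassicalEpsilon FunctionalExtensionality.
From Coquelicot Require Import Coquelicot.
Import Defs.
Open Scope R_scope.

Lemma Cmod_re (z : C) : Rabs (fst z) <= Cmod z.
Proof. destruct z as [x y]. unfold Cmod; simpl. rewrite <- sqrt_Rsqr_abs.
  apply sqrt_le_1_alt. unfold Rsqr. nra. Qed.
Lemma Cmod_im (z : C) : Rabs (snd z) <= Cmod z.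
Proof. destruct z as [x y]. unfold Cmod; simpl. rewrite <- sqrt_Rsqr_abs.
  apply sqrt_le_1_alt. unfold Rsqr. nra. Qed.
Lemma Cmod_le_sum (z : C) : Cmod z <= Rabs (fst z) + Rabs (snd z).
Proof. destruct z as [x y]. unfold Cmod; simpl.
  rewrite <- (sqrt_Rsqr (Rabs x + Rabs y)) by (pose proof (Rabs_pos x); pose proof (Rabs_pos y); lra).
  apply sqrt_le_1_alt. unfold Rsqr.
  pose proof (Rabs_pos x); pose proof (Rabs_pos y).
  assert (x*(x*1) = Rabs x * Rabs x) by (rewrite Rmult_1_r, <- Rabs_mult; symmetry; apply Rabs_right; nra).
  assert (y*(y*1) = Rabs y * Rabs y) by (rewrite Rmult_1_r, <- Rabs_mult; symmetry; apply Rabs_right; nra).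
  nra. Qed.
Lemma Cmod_sym (x y : C) : Cmod (x - y) = Cmod (y - x).
Proof. replace (x - y)%C with (- (y - x))%C by ring. apply Cmod_opp. Qed.
Lemma Cmod_RtoC_mult r z : Cmod (RtoC r * z) = Rabs r * Cmod z.
Proof. rewrite Cmod_mult, Cmod_R. reflexivity. Qed.
Lemma Cmod_tri (x y z : C) : Cmod (x - z) <= Cmod (x - y) + Cmod (y - z).
Proof. replace (x - z)%C with ((x - y) + (y - z))%C by ring. apply Cmod_triangle. Qed.
Lemma Cmod_pow_le (x : C) X k : Cmod x <= X -> Cmod (x^k) <= X^k.
Proof. intros H. rewrite Cmod_pow. apply pow_incr. split; [apply Cmod_ge_0|exact H]. Qed.

Lemma Cpow_lip k X : 0 <= X -> exists L, 0 <= L /\ forall x x' : C, Cmod x <= X -> Cmod x' <= X ->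
  Cmod (x^k - x'^k) <= L * Cmod (x - x').
Proof.
  intros HX. induction k as [|k [L [HL IH]]].
  - exists 0. split; [lra|]. intros. simpl. replace (1 - 1)%C with (RtoC 0) by ring. rewrite Cmod_0. pose proof (Cmod_ge_0 (x-x')). lra.
  - exists (X * L + X^k). split. { pose proof (pow_le X k HX). nra. }
    intros x x' Hx Hx'. simpl.
    replace (x * x^k - x' * x'^k)%C with (x * (x^k - x'^k) + (x - x') * x'^k)%C by ring.
    eapply Rle_trans; [apply Cmod_triangle|]. rewrite !Cmod_mult.
    pose proof (IH x x' Hx Hx'). pose proof (Cmod_pow_le x' X k Hx').
    pose proof (Cmod_ge_0 x). pose proof (Cmod_ge_0 (x - x')). pose proof (Cmod_ge_0 (x^k - x'^k)).
    pose proof (Cmod_ge_0 (x'^k)).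
    assert (Cmod x * Cmod (x ^ k - x' ^ k) <= X * (L * Cmod (x - x'))) by (apply Rmult_le_compat; auto).
    assert (Cmod (x - x') * Cmod (x' ^ k) <= Cmod (x - x') * X^k) by (apply Rmult_le_compat_l; auto).
    nra.
Qed.

Lemma cpoly_S alpha m z : cpoly alpha (S m) z = (cpoly alpha m z + alpha (S m) * z^(S m))%C.
Proof. reflexivity. Qed.
Lemma cpoly_0 alpha z : cpoly alpha 0 z = alpha O.
Proof. reflexivity. Qed.

Fixpoint ph (b : nat -> C) (k : nat) (s : R) (x : C) : C :=
  match k with O => b O | S j => (RtoC s * ph b j s x + b (S j) * x^(S j))%C end.

Lemma ph_cpoly b k s x : s <> 0 -> (RtoC (s^k) * cpoly b k (x / RtoC s))%C = ph b k s x.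
Proof.
  intros Hs. assert (Hs' : RtoC s <> 0%C) by (intro E; apply Hs; injection E; auto).
  induction k.
  - simpl. ring.
  - rewrite cpoly_S. cbn [ph]. rewrite <- IHk.
    replace (RtoC (s ^ S k)) with (RtoC s * RtoC (s^k))%C by (simpl; rewrite RtoC_mult; reflexivity).
    rewrite RtoC_pow. unfold Cdiv. rewrite Cpow_mult_l. rewrite Cpow_inv by auto. 
    simpl Cpow. field. split; auto. apply Cpow_nz; auto.
Qed.

Lemma ph_lip b k X : 0 <= X -> exists B L, 0 <= B /\ 0 <= L /\
  forall s s' x x', Rabs s <= 1 -> Rabs s' <= 1 -> Cmod x <= X -> Cmod x' <= X ->
   Cmod (ph b k s x) <= B /\ Cmod (ph b k s x - ph b k s' x') <= L * (Rabs (s - s') + Cmod (x - x')).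
Proof.
  intros HX. induction k as [|k [B [L [HB [HL IH]]]]].
  - exists (Cmod (b O)), 0. split; [apply Cmod_ge_0|split; [lra|]]. intros. simpl. split; [lra|].
    replace (b O - b O)%C with (RtoC 0) by ring. rewrite Cmod_0.
    pose proof (Rabs_pos (s - s')). pose proof (Cmod_ge_0 (x-x')). lra.
  - destruct (Cpow_lip (S k) X HX) as [Lp [HLp Hp]].
    exists (B + Cmod (b (S k)) * X^(S k)), (B + L + Cmod (b (S k)) * Lp).
    pose proof (Cmod_ge_0 (b (S k))). pose proof (pow_le X (S k) HX).
    split; [nra|split; [nra|]].
    intros s s' x x' Hs Hs' Hx Hx'. destruct (IH s s' x x' Hs Hs' Hx Hx') as [IH1 IH2].
    pose proof (Cmod_pow_le x X (S k) Hx).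
    pose proof (Cmod_ge_0 (ph b k s x)). pose proof (Rabs_pos s).
    pose proof (Rabs_pos (s - s')). pose proof (Cmod_ge_0 (x-x')).
    split.
    + cbn [ph]. eapply Rle_trans; [apply Cmod_triangle|]. rewrite Cmod_RtoC_mult, Cmod_mult.
      assert (Rabs s * Cmod (ph b k s x) <= 1 * B) by (apply Rmult_le_compat; auto).
      assert (Cmod (b (S k)) * Cmod (x^S k) <= Cmod (b (S k)) * X^S k) by (apply Rmult_le_compat_l; auto).
      lra.
    + cbn [ph].
      replace (RtoC s * ph b k s x + b (S k) * x ^ S k - (RtoC s' * ph b k s' x' + b (S k) * x' ^ S k))%C
        with (RtoC (s - s') * ph b k s x + RtoC s' * (ph b k s x - ph b k s' x') + b (S k) * (x^S k - x'^S k))%C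
        by (rewrite RtoC_minus; ring).
      eapply Rle_trans; [apply Cmod_triangle|]. eapply Rle_trans; [apply Rplus_le_compat_r, Cmod_triangle|].
      rewrite !Cmod_RtoC_mult, Cmod_mult.
      pose proof (Hp x x' Hx Hx'). pose proof (Rabs_pos s').
      pose proof (Cmod_ge_0 (ph b k s x - ph b k s' x')).
      assert (Rabs (s - s') * Cmod (ph b k s x) <= Rabs (s - s') * B) by (apply Rmult_le_compat_l; auto).
      assert (Rabs s' * Cmod (ph b k s x - ph b k s' x') <= 1 * (L * (Rabs (s - s') + Cmod (x - x')))) by (apply Rmult_le_compat; auto).
      assert (Cmod (b (S k)) * Cmod (x ^ S k - x' ^ S k) <= Cmod (b (S k)) * (Lp * Cmod (x - x'))) by (apply Rmult_le_compat_l; auto).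
      assert (0 <= B * Cmod (x - x')) by (apply Rmult_le_pos; auto). assert (0 <= Cmod (b (S k)) * Lp * Rabs (s - s')) by (apply Rmult_le_pos; [apply Rmult_le_pos|]; auto). lra.
Qed.

Lemma near1_bound y rho : rho <= 1 -> Cmod (y - 1) <= rho -> Cmod y <= 2.
Proof. intros H1 H2. replace y with ((y - 1) + 1)%C by ring.
  eapply Rle_trans; [apply Cmod_triangle|]. rewrite Cmod_1. lra. Qed.

Lemma pow_near1 k : exists K, 0 <= K /\ forall rho y, 0 <= rho <= 1 -> Cmod (y - 1) <= rho ->
  Cmod (y^k - 1) <= K * rho.
Proof.
  induction k as [|k [K [HK IH]]].
  - exists 0. split; [lra|]. intros. simpl. replace (1 - 1)%C with (RtoC 0) by ring. rewrite Cmod_0. lra.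
  - exists (2 * K + 1). split; [lra|]. intros rho y Hr Hy.
    simpl. replace (y * y^k - 1)%C with (y * (y^k - 1) + (y - 1))%C by ring.
    eapply Rle_trans; [apply Cmod_triangle|]. rewrite Cmod_mult.
    pose proof (near1_bound y rho (proj2 Hr) Hy). pose proof (IH rho y Hr Hy).
    pose proof (Cmod_ge_0 (y^k - 1)).
    assert (Cmod y * Cmod (y ^ k - 1) <= 2 * (K * rho)) by (apply Rmult_le_compat; auto; apply Cmod_ge_0).
    nra.
Qed.

Lemma Dk_bound k : exists K, 0 <= K /\ forall rho y y', 0 <= rho <= 1 -> Cmod (y - 1) <= rho -> Cmod (y' - 1) <= rho ->
  Cmod (y^k - y'^k - RtoC (INR k) * (y - y')) <= K * rho * Cmod (y - y').
Proof.
  induction k as [|k [K [HK IH]]].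
  - exists 0. split; [lra|]. intros. simpl.
    replace (1 - 1 - RtoC 0 * (y - y'))%C with (RtoC 0) by ring. rewrite Cmod_0. lra.
  - destruct (pow_near1 k) as [K' [HK' Hp]].
    exists (2 * K + INR k + K'). pose proof (pos_INR k). split; [lra|]. intros rho y y' Hr Hy Hy'.
    replace (y ^ S k - y' ^ S k - RtoC (INR (S k)) * (y - y'))%C
      with (y * (y^k - y'^k - RtoC (INR k) * (y - y')) + (y - y') * (RtoC (INR k) * (y - 1) + (y'^k - 1)))%C
      by (rewrite S_INR, RtoC_plus; simpl; ring).
    eapply Rle_trans; [apply Cmod_triangle|]. rewrite !Cmod_mult.
    pose proof (near1_bound y rho (proj2 Hr) Hy). pose proof (IH rho y y' Hr Hy Hy').
    pose proof (Hp rho y' Hr Hy').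
    assert (Cmod (RtoC (INR k) * (y - 1) + (y' ^ k - 1)) <= INR k * rho + K' * rho).
    { eapply Rle_trans; [apply Cmod_triangle|]. rewrite Cmod_RtoC_mult, Rabs_right by lra.
      pose proof (Cmod_ge_0 (y-1)). nra. }
    pose proof (Cmod_ge_0 (y - y')). pose proof (Cmod_ge_0 (y ^ k - y' ^ k - RtoC (INR k) * (y - y'))).
    assert (Cmod y * Cmod (y ^ k - y' ^ k - RtoC (INR k) * (y - y')) <= 2 * (K * rho * Cmod (y - y'))) by (apply Rmult_le_compat; auto; apply Cmod_ge_0).
    assert (Cmod (y - y') * Cmod (RtoC (INR k) * (y - 1) + (y' ^ k - 1)) <= Cmod (y - y') * (INR k * rho + K' * rho)) by (apply Rmult_le_compat_l; auto).
    nra.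
Qed.

Lemma lip_cont (f : R -> R) K : (forall r r', Rabs (f r - f r') <= K * Rabs (r - r')) -> forall x, continuity_pt f x.
Proof.
  intros H x eps Heps. exists (eps / (Rabs K + 1)). split.
  { apply Rdiv_lt_0_compat; [lra|]. pose proof (Rabs_pos K); lra. }
  intros y [_ Hy]. simpl in *. unfold R_dist in *.
  pose proof (H y x). pose proof (Rabs_pos K). pose proof (Rle_abs K). pose proof (Rabs_pos (y - x)).
  assert (K * Rabs (y - x) <= Rabs K * Rabs (y - x)) by (apply Rmult_le_compat_r; auto).
  assert (Rabs K * Rabs (y - x) <= Rabs K * (eps / (Rabs K + 1))) by (apply Rmult_le_compat_l; lra).
  assert (Rabs K * (eps / (Rabs K + 1)) < eps).
  { apply Rmult_lt_reg_r with (Rabs K + 1); [lra|]. field_simplify; lra. }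
  lra.
Qed.

Lemma cont_mult_pow (h : R -> R) m x : continuity_pt h x -> continuity_pt (fun r => r^m * h r) x.
Proof.
  intros H. apply (continuity_pt_mult (fun r => r^m) h). 2: exact H.
  apply derivable_continuous_pt, derivable_pt_pow.
Qed.

Lemma cpt_cont (f : R -> R) x : continuity_pt f x -> continuous f x.
Proof. intros H. apply continuity_pt_filterlim. exact H. Qed.

Lemma exR (f : R -> R) a b : (forall x, continuity_pt f x) -> ex_RInt f a b.
Proof. intros H. apply (ex_RInt_continuous (V:=R_CompleteNormedModule)). intros. apply cpt_cont. auto. Qed.

Lemma int_bound (f1 f2 g1 g2 : R -> R) M :
  (forall x, continuity_pt f1 x) -> (forall x, continuity_pt f2 x) ->
  (forall x, continuity_pt g1 x) -> (forall x, continuity_pt g2 x) ->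
  (forall r, 0 <= r <= 1 -> Cmod ((f1 r, f2 r) - (g1 r, g2 r))%C <= M) ->
  Cmod ((RInt f1 0 1, RInt f2 0 1) - (RInt g1 0 1, RInt g2 0 1))%C <= 2 * M.
Proof.
  intros C1 C2 C3 C4 HM.
  assert (E1 : RInt f1 0 1 - RInt g1 0 1 = RInt (fun r => f1 r - g1 r) 0 1).
  { symmetry. apply (RInt_minus f1 g1); apply exR; auto. }
  assert (E2 : RInt f2 0 1 - RInt g2 0 1 = RInt (fun r => f2 r - g2 r) 0 1).
  { symmetry. apply (RInt_minus f2 g2); apply exR; auto. }
  eapply Rle_trans; [apply Cmod_le_sum|]. simpl fst; simpl snd.
  change (RInt f1 0 1 + - RInt g1 0 1) with (RInt f1 0 1 - RInt g1 0 1).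
  change (RInt f2 0 1 + - RInt g2 0 1) with (RInt f2 0 1 - RInt g2 0 1).
  rewrite E1, E2.
  assert (B1 : Rabs (RInt (fun r => f1 r - g1 r) 0 1) <= (1 - 0) * M).
  { apply abs_RInt_le_const; [lra| |].
    - apply (ex_RInt_minus f1 g1); apply exR; auto.
    - intros t Ht. specialize (HM t Ht). eapply Rle_trans; [|exact HM].
      apply (Cmod_re ((f1 t, f2 t) - (g1 t, g2 t))%C). }
  assert (B2 : Rabs (RInt (fun r => f2 r - g2 r) 0 1) <= (1 - 0) * M).
  { apply abs_RInt_le_const; [lra| |].
    - apply (ex_RInt_minus f2 g2); apply exR; auto.
    - intros t Ht. specialize (HM t Ht). eapply Rle_trans; [|exact HM].
      apply (Cmod_im ((f1 t, f2 t) - (g1 t, g2 t))%C). }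
  lra.
Qed.

Section Picard.
Variable m : nat.
Variable Gh : R -> C -> C.
Variables rho Ls kap : R.
Hypothesis Hrho : 0 < rho.
Hypothesis HLs : 0 <= Ls.
Hypothesis Hkap : 0 <= kap <= 1/4.
Hypothesis H1 : forall s u u', Cmod u <= rho -> Cmod u' <= rho -> Cmod (Gh s u - Gh s u') <= kap * Cmod (u - u').
Hypothesis H2 : forall s s' u, Cmod u <= rho -> Cmod (Gh s u - Gh s' u) <= Ls * Rabs (s - s').
Hypothesis H3 : forall s, Cmod (Gh s 0) <= rho / 4.

Definition Lam := 4 * Ls.
Definition Kc (mu : R -> C) := (forall s, Cmod (mu s) <= rho) /\ (forall s s', Cmod (mu s - mu s') <= Lam * Rabs (s - s')).

Definition Phi (mu : R -> C) (sg : R) : C :=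
  (RInt (fun r => r^m * fst (Gh (sg*r) (mu (sg*r)))) 0 1, RInt (fun r => r^m * snd (Gh (sg*r) (mu (sg*r)))) 0 1).

Lemma Gmu_lip mu : Kc mu -> forall a b, Cmod (Gh a (mu a) - Gh b (mu b)) <= (kap * Lam + Ls) * Rabs (a - b).
Proof.
  intros [Kb Kl] a b. eapply Rle_trans; [apply (Cmod_tri _ (Gh a (mu b)))|].
  pose proof (H1 a _ _ (Kb a) (Kb b)). pose proof (H2 a b (mu b) (Kb _)).
  pose proof (Kl a b).
  assert (kap * Cmod (mu a - mu b) <= kap * (Lam * Rabs (a - b))) by (apply Rmult_le_compat_l; lra).
  nra.
Qed.

Lemma comp_cont1 mu sg : Kc mu -> forall x, continuity_pt (fun r => r^m * fst (Gh (sg*r) (mu (sg*r)))) x.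
Proof. intros HK x. apply cont_mult_pow. apply (lip_cont _ ((kap * Lam + Ls) * Rabs sg)). intros r r'.
  eapply Rle_trans; [apply (Cmod_re (_ - _)%C)|]. eapply Rle_trans; [apply (Gmu_lip mu HK)|].
  replace (sg * r - sg * r') with (sg * (r - r')) by ring. rewrite Rabs_mult. lra. Qed.
Lemma comp_cont2 mu sg : Kc mu -> forall x, continuity_pt (fun r => r^m * snd (Gh (sg*r) (mu (sg*r)))) x.
Proof. intros HK x. apply cont_mult_pow. apply (lip_cont _ ((kap * Lam + Ls) * Rabs sg)). intros r r'.
  eapply Rle_trans; [apply (Cmod_im (_ - _)%C)|]. eapply Rle_trans; [apply (Gmu_lip mu HK)|].
  replace (sg * r - sg * r') with (sg * (r - r')) by ring. rewrite Rabs_mult. lra. Qed.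

Lemma pow_le_one r k : 0 <= r <= 1 -> 0 <= r^k <= 1.
Proof. intros Hr. induction k; simpl; [lra|]. split; [apply Rmult_le_pos; lra|].
  replace 1 with (1*1) by ring. apply Rmult_le_compat; lra. Qed.

Lemma integrand_diff (r : R) (z w : C) : (((r^m * fst z)%R, (r^m * snd z)%R) - ((r^m * fst w)%R, (r^m * snd w)%R))%C = (RtoC (r^m) * (z - w))%C.
Proof. destruct z, w. unfold RtoC, Cmult, Cminus, Cplus, Copp; simpl. f_equal; ring. Qed.

Lemma Phi_diff mu nu D : Kc mu -> Kc nu -> (forall s, Cmod (mu s - nu s) <= D) ->
  forall sg, Cmod (Phi mu sg - Phi nu sg) <= 2 * (kap * D).
Proof.
  intros Km Kn HD sg. unfold Phi. apply int_bound.
  1,2: apply comp_cont1 || apply comp_cont2; auto.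
  1,2: apply comp_cont1 || apply comp_cont2; auto.
  intros r Hr. rewrite integrand_diff, Cmod_RtoC_mult.
  destruct (pow_le_one r m Hr). rewrite Rabs_right by lra.
  pose proof (H1 (sg*r) _ _ (proj1 Km (sg*r)) (proj1 Kn (sg*r))).
  pose proof (HD (sg*r)). pose proof (Cmod_ge_0 (Gh (sg * r) (mu (sg * r)) - Gh (sg * r) (nu (sg * r)))).
  assert (kap * Cmod (mu (sg * r) - nu (sg * r)) <= kap * D) by (apply Rmult_le_compat_l; lra).
  nra.
Qed.

Lemma Phi_lip mu : Kc mu -> forall sg sg', Cmod (Phi mu sg - Phi mu sg') <= Lam * Rabs (sg - sg').
Proof.
  intros Km sg sg'. unfold Phi.
  eapply Rle_trans. apply (int_bound _ _ _ _ ((kap * Lam + Ls) * Rabs (sg - sg'))).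
  1,2: apply comp_cont1 || apply comp_cont2; auto.
  1,2: apply comp_cont1 || apply comp_cont2; auto.
  - intros r Hr. rewrite integrand_diff, Cmod_RtoC_mult.
    destruct (pow_le_one r m Hr). rewrite Rabs_right by lra.
    pose proof (Gmu_lip mu Km (sg*r) (sg'*r)) as HG.
    replace (sg * r - sg' * r) with ((sg - sg') * r) in HG by ring.
    rewrite Rabs_mult, (Rabs_right r) in HG by lra.
    pose proof (Rabs_pos (sg - sg')). unfold Lam in *.
    pose proof (Cmod_ge_0 (Gh (sg * r) (mu (sg * r)) - Gh (sg' * r) (mu (sg' * r)))).
    assert (0 <= (kap * (4 * Ls) + Ls) * Rabs (sg - sg')) by (apply Rmult_le_pos; nra).
    assert (r ^ m * Cmod (Gh (sg * r) (mu (sg * r)) - Gh (sg' * r) (mu (sg' * r))) <= 1 * ((kap * (4 * Ls) + Ls) * Rabs (sg - sg') * r)).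
    { apply Rmult_le_compat; [lra|apply Cmod_ge_0|lra|]. rewrite Rmult_assoc. exact HG. }
    nra.
  - unfold Lam. pose proof (Rabs_pos (sg - sg')).
    assert (kap * (Ls * Rabs (sg - sg')) <= 1/4 * (Ls * Rabs (sg - sg'))) by (apply Rmult_le_compat_r; [apply Rmult_le_pos|]; lra).
    lra.
Qed.

Lemma Phi_bound mu : Kc mu -> forall sg, Cmod (Phi mu sg) <= rho.
Proof.
  intros Km sg.
  assert (E : Phi mu sg = (Phi mu sg - (RInt (fun r => (r^m * fst (RtoC 0))%R) 0 1, RInt (fun r => (r^m * snd (RtoC 0))%R) 0 1))%C).
  { assert (Z1 : RInt (fun r => (r^m * fst (RtoC 0))%R) 0 1 = 0).
    { rewrite (RInt_ext _ (fun _ => 0)). rewrite RInt_const. unfold scal; simpl; unfold mult; simpl; ring.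
      intros; simpl; ring. }
    assert (Z2 : RInt (fun r => (r^m * snd (RtoC 0))%R) 0 1 = 0).
    { rewrite (RInt_ext _ (fun _ => 0)). rewrite RInt_const. unfold scal; simpl; unfold mult; simpl; ring.
      intros; simpl; ring. }
    rewrite Z1, Z2. destruct (Phi mu sg). unfold Cminus, Cplus, Copp; simpl. f_equal; ring. }
  rewrite E. unfold Phi. eapply Rle_trans. apply (int_bound _ _ _ _ (rho/2)).
  1,2: apply comp_cont1 || apply comp_cont2; auto.
  1,2: intros; apply cont_mult_pow; apply continuity_pt_const; intros ? ?; reflexivity.
  - intros r Hr. rewrite integrand_diff, Cmod_RtoC_mult.
    destruct (pow_le_one r m Hr). rewrite Rabs_right by lra.
    assert (Cmod (RtoC 0) <= rho) by (rewrite Cmod_0; lra).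
    pose proof (H1 (sg*r) _ _ (proj1 Km (sg*r)) H4). pose proof (H3 (sg*r)).
    replace (mu (sg * r)%R - RtoC 0)%C with (mu (sg*r)) in H5 by ring.
    pose proof (proj1 Km (sg*r)).
    assert (Cmod (Gh (sg * r) (mu (sg * r)) - RtoC 0) <= rho / 2).
    { replace (Gh (sg * r)%R (mu (sg * r)%R) - RtoC 0)%C with ((Gh (sg * r)%R (mu (sg * r)%R) - Gh (sg*r)%R (RtoC 0)) + Gh (sg*r)%R (RtoC 0))%C by ring.
      eapply Rle_trans; [apply Cmod_triangle|]. 
      assert (kap * Cmod (mu (sg * r)) <= 1/4 * rho) by (apply Rmult_le_compat; try lra; apply Cmod_ge_0).
      lra. }
    pose proof (Cmod_ge_0 (Gh (sg * r) (mu (sg * r)) - RtoC 0)).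
    nra.
  - lra.
Qed.

Lemma Phi_K mu : Kc mu -> Kc (Phi mu).
Proof. intros Km. split; [apply Phi_bound; auto | apply Phi_lip; auto]. Qed.

Fixpoint it (k : nat) : R -> C := match k with O => fun _ => RtoC 0 | S j => Phi (it j) end.

Lemma it_K k : Kc (it k).
Proof. induction k; simpl.
  - split; intros; [rewrite Cmod_0; lra|]. replace (RtoC 0 - RtoC 0)%C with (RtoC 0) by ring. rewrite Cmod_0.
    unfold Lam. pose proof (Rabs_pos (s - s')). nra.
  - apply Phi_K; auto.
Qed.

Lemma it_step k : forall s, Cmod (it (S k) s - it k s) <= 2 * rho * (1/2)^k.
Proof.
  induction k; intros s.
  - simpl. replace (Phi (fun _ => RtoC 0) s - RtoC 0)%C with (Phi (fun _ => RtoC 0) s) by ring.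
    pose proof (Phi_bound (it 0) (it_K 0) s). simpl in H. lra.
  - change (it (S (S k)) s - it (S k) s)%C with (Phi (it (S k)) s - Phi (it k) s)%C.
    eapply Rle_trans. apply (Phi_diff _ _ _ (it_K (S k)) (it_K k) IHk).
    simpl. pose proof (pow_le (1/2) k).
    assert (kap * (rho*(1/2)^k) <= 1/4 * (rho * (1/2)^k)) by (apply Rmult_le_compat_r; [apply Rmult_le_pos|]; lra). lra.
Qed.

Lemma le_eps a b : (forall e, 0 < e -> a <= b + e) -> a <= b.
Proof. intros H. destruct (Rle_or_lt a b); auto. specialize (H ((a - b)/2)). lra. Qed.

Lemma geo_small c e : 0 < e -> exists N, forall k, (k >= N)%nat -> c * (1/2)^k < e.
Proof.
  intros He. destruct (Req_dec c 0) as [->|Hc].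
  - exists O. intros. lra.
  - destruct (pow_lt_1_zero (1/2) ltac:(rewrite Rabs_right; lra) (e / Rabs c)) as [N HN].
    { apply Rdiv_lt_0_compat; auto. apply Rabs_pos_lt; auto. }
    exists N. intros k Hk. specialize (HN k Hk). rewrite Rabs_right in HN by (apply Rle_ge, pow_le; lra).
    pose proof (Rabs_pos_lt c Hc). pose proof (Rle_abs c). pose proof (pow_le (1/2) k ltac:(lra)).
    apply Rle_lt_trans with (Rabs c * (1/2)^k). apply Rmult_le_compat_r; lra.
    apply Rmult_lt_reg_r with (/ Rabs c). apply Rinv_0_lt_compat; lra.
    replace (Rabs c * (1 / 2) ^ k * / Rabs c) with ((1/2)^k) by (field; lra). exact HN.
Qed.

Lemma geo_zero X Y B : (forall k, X <= Y + B * (1/2)^k) -> X <= Y.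
Proof.
  intros H. apply le_eps. intros e He. destruct (geo_small B e He) as [N HN].
  specialize (H N). specialize (HN N (le_n N)). lra.
Qed.


Lemma lim_C (x : nat -> C) c : 0 <= c -> (forall k, Cmod (x (S k) - x k) <= c * (1/2)^k) ->
  exists l, forall k, Cmod (l - x k) <= 2 * c * (1/2)^k.
Proof.
  intros Hc Hx.
  assert (T : forall k j, Cmod (x (k + j)%nat - x k) <= 2 * c * (1/2)^k * (1 - (1/2)^j)).
  { intros k j. induction j.
    - rewrite Nat.add_0_r. replace (x k - x k)%C with (RtoC 0) by ring. rewrite Cmod_0. simpl. lra.
    - eapply Rle_trans; [apply (Cmod_tri _ (x (k + j)%nat))|].
      replace (k + S j)%nat with (S (k + j)) by lia. specialize (Hx (k+j)%nat).
      rewrite pow_add in Hx. simpl pow at 2. simpl pow in IHj |- *. lra. }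
  assert (T2 : forall k j, (k <= j)%nat -> Cmod (x j - x k) <= 2 * c * (1/2)^k).
  { intros k j Hkj. replace j with (k + (j - k))%nat by lia. eapply Rle_trans; [apply T|].
    pose proof (pow_le (1/2) (j-k)). pose proof (pow_le (1/2) k). 
    assert (0 <= 2 * c * (1/2)^k) by (apply Rmult_le_pos; lra). nra. }
  assert (Cau : forall (p : C -> R), (forall z, Rabs (p z) <= Cmod z) -> (forall z w, p (z - w)%C = p z - p w) ->
     Cauchy_crit (fun k => p (x k))).
  { intros p Hp Hl e He. destruct (geo_small (2*c) e He) as [N HN]. exists N. intros a b Ha Hb.
    unfold Rdist. rewrite <- Hl. eapply Rle_lt_trans; [apply Hp|].
    destruct (Nat.le_ge_cases a b).
    - rewrite Cmod_sym. eapply Rle_lt_trans; [apply T2; auto|]. apply HN. lia.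
    - eapply Rle_lt_trans; [apply T2; auto|]. apply HN. lia. }
  destruct (Rcomplete.R_complete _ (Cau fst Cmod_re (fun z w => eq_refl))) as [l1 Hl1].
  destruct (Rcomplete.R_complete _ (Cau snd Cmod_im (fun z w => eq_refl))) as [l2 Hl2].
  exists (l1, l2). intros k. apply le_eps. intros e He.
  destruct (Hl1 (e/2) ltac:(lra)) as [N1 HN1]. destruct (Hl2 (e/2) ltac:(lra)) as [N2 HN2].
  set (N := (N1 + N2 + k)%nat).
  specialize (HN1 N ltac:(unfold N; lia)). specialize (HN2 N ltac:(unfold N; lia)).
  eapply Rle_trans; [apply (Cmod_tri _ (x N))|].
  pose proof (T2 k N ltac:(unfold N; lia)).
  pose proof (Cmod_le_sum ((l1, l2) - x N)%C). simpl in H0. unfold Rdist in *.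
  rewrite Rabs_minus_sym in HN1, HN2. 
  change (l1 + - fst (x N)) with (l1 - fst (x N)) in H0. change (l2 + - snd (x N)) with (l2 - snd (x N)) in H0.
  lra.
Qed.

Theorem picard_exists : exists mu, Kc mu /\ forall s, mu s = Phi mu s.
Proof.
  assert (Hl : forall s, exists l, forall k, Cmod (l - it k s) <= 2 * (2 * rho) * (1/2)^k).
  { intros s. apply lim_C; [lra|]. intros k. apply it_step. }
  set (mu := fun s => proj1_sig (constructive_indefinite_description _ (Hl s))).
  assert (Hmu : forall s k, Cmod (mu s - it k s) <= 4 * rho * (1/2)^k).
  { intros s k. unfold mu. destruct (constructive_indefinite_description _ (Hl s)) as [l Hl']. simpl.
    specialize (Hl' k). lra. }
  assert (Km : Kc mu).
  { split.
    - intros s. apply (geo_zero _ _ (4 * rho)). intros k.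
      replace (mu s) with ((mu s - it k s) + it k s)%C by ring.
      eapply Rle_trans; [apply Cmod_triangle|]. pose proof (Hmu s k). pose proof (proj1 (it_K k) s). lra.
    - intros s s'. apply (geo_zero _ _ (8 * rho)). intros k.
      eapply Rle_trans; [apply (Cmod_tri _ (it k s))|].
      eapply Rle_trans; [apply Rplus_le_compat_l, (Cmod_tri _ (it k s'))|].
      pose proof (Hmu s k). pose proof (Hmu s' k). rewrite Cmod_sym in H0. pose proof (proj2 (it_K k) s s'). lra. }
  exists mu. split; auto. intros s.
  assert (Cmod (mu s - Phi mu s) <= 0).
  { apply (geo_zero _ _ (4 * rho)). intros k.
    eapply Rle_trans; [apply (Cmod_tri _ (it (S k) s))|].
    pose proof (Hmu s (S k)) as HH. change (it (S k) s) with (Phi (it k) s) in HH |- *.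
    pose proof (Phi_diff _ _ (4 * rho * (1/2)^k) (it_K k) Km (fun s => ltac:(rewrite Cmod_sym; apply Hmu)) s).
    simpl pow in HH. 
    assert (kap * (4 * rho * (1/2)^k) <= 1/4 * (4 * rho * (1/2)^k)) by (apply Rmult_le_compat_r; [pose proof (pow_le (1/2) k); nra|lra]).
    lra. }
  pose proof (Cmod_ge_0 (mu s - Phi mu s)).
  assert (E : (mu s - Phi mu s)%C = RtoC 0) by (apply Cmod_eq_0; lra).
  replace (mu s) with ((mu s - Phi mu s) + Phi mu s)%C by ring. rewrite E. ring.
Qed.

End Picard.

Section Deriv.
Variable m : nat.
Variable Gh : R -> C -> C.
Variables rho Ls kap : R.
Hypothesis Hkap : 0 <= kap <= 1/4.
Hypothesis H1 : forall s u u', Cmod u <= rho -> Cmod u' <= rho -> Cmod (Gh s u - Gh s u') <= kap * Cmod (u - u').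
Hypothesis H2 : forall s s' u, Cmod u <= rho -> Cmod (Gh s u - Gh s' u) <= Ls * Rabs (s - s').
Variable mu : R -> C.
Hypothesis Km : Kc rho Ls mu.
Hypothesis Hfix : forall s, mu s = Phi m Gh mu s.

Definition F1 s := s^m * fst (Gh s (mu s)).
Definition F2 s := s^m * snd (Gh s (mu s)).

Lemma F1_cont x : continuity_pt F1 x.
Proof. unfold F1. apply cont_mult_pow. apply (lip_cont _ (kap * Lam Ls + Ls)). intros r r'.
  eapply Rle_trans; [apply (Cmod_re (_ - _)%C)|]. apply (Gmu_lip Gh rho Ls kap Hkap H1 H2 mu Km). Qed.
Lemma F2_cont x : continuity_pt F2 x.
Proof. unfold F2. apply cont_mult_pow. apply (lip_cont _ (kap * Lam Ls + Ls)). intros r r'.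
  eapply Rle_trans; [apply (Cmod_im (_ - _)%C)|]. apply (Gmu_lip Gh rho Ls kap Hkap H1 H2 mu Km). Qed.

Lemma scale_int (F : R -> R) (g : R -> C) (p : C -> R) sg : 0 < sg -> (forall x, continuity_pt F x) ->
  (forall s, F s = s^m * p (g s)) ->
  RInt (fun r => r^m * p (g (sg * r))) 0 1 = RInt F 0 sg / sg^(S m).
Proof.
  intros Hs HF HFe.
  rewrite (RInt_ext _ (fun r => scal (/ sg^(S m)) (scal sg (F (sg * r + 0))))).
  - rewrite (RInt_scal (V:=R_CompleteNormedModule)).
    + assert (EQ := RInt_comp_lin (V:=R_CompleteNormedModule) F sg 0 0 1 ltac:(apply exR; auto)).
      unfold scal in *; simpl in *; unfold mult in *; simpl in *. rewrite EQ.
      replace (sg * 0 + 0) with 0 by ring. replace (sg * 1 + 0) with sg by ring. unfold Rdiv. ring.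
    + apply (ex_RInt_ext (fun y => sg * F (sg * y + 0))). { intros; reflexivity. }
      apply exR. intros x. apply continuity_pt_mult. apply continuity_pt_const; intros ? ?; reflexivity.
      apply (continuity_pt_comp (fun y => sg * y + 0) F). 
      apply derivable_continuous_pt. 
      apply derivable_pt_plus; [apply derivable_pt_scal, derivable_pt_id| apply derivable_pt_const]. auto.
  - intros x _. unfold scal; simpl; unfold mult; simpl. rewrite HFe. replace (sg * x + 0) with (sg * x) by ring.
    rewrite Rpow_mult_distr. simpl pow at 2. assert (sg^m <> 0) by (apply pow_nonzero; lra).
    field. repeat split; auto; lra.
Qed.

Lemma deriv_fixed sg : 0 < sg -> exists dmu : C,
  is_derive (fun s => fst (mu s)) sg (fst dmu) /\ is_derive (fun s => snd (mu s)) sg (snd dmu) /\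
  (RtoC sg * dmu)%C = (Gh sg (mu sg) - RtoC (INR (S m)) * mu sg)%C.
Proof.
  intros Hs.
  assert (Hrep : forall (F : R -> R) (p : C -> R), (forall x, continuity_pt F x) ->
      (forall s, F s = s^m * p (Gh s (mu s))) -> (forall s, p (mu s) = RInt (fun r => r^m * p (Gh (s*r) (mu (s*r)))) 0 1) ->
      is_derive (fun s => p (mu s)) sg ((F sg * sg^(S m) - RInt F 0 sg * (INR (S m) * 1 * sg^m)) / (sg^(S m))^2)).
  { intros F p HF HFe Hp.
    apply (is_derive_ext_loc (fun s => RInt F 0 s / s^(S m))).
    - exists (mkposreal sg Hs). intros s Hb. unfold ball in Hb; simpl in Hb. unfold AbsRing_ball, abs, minus, plus, opp in Hb; simpl in Hb.
      assert (0 < s) by (apply Rabs_def2 in Hb; lra).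
      rewrite Hp. symmetry. apply (scale_int F (fun s => Gh s (mu s)) p); auto.
    - apply is_derive_div.
      + apply (is_derive_RInt F (fun b => RInt F 0 b) 0). 
        * exists (mkposreal 1 Rlt_0_1). intros b _. apply (RInt_correct (V:=R_CompleteNormedModule) F 0 b). apply exR; auto.
        * apply cpt_cont; auto.
      + replace (INR (S m) * 1 * sg ^ m) with (INR (S m) * 1 * sg ^ Init.Nat.pred (S m)) by reflexivity.
        apply (is_derive_pow (fun x => x)). apply (is_derive_id (K:=R_AbsRing)).
      + apply pow_nonzero; lra. }
  pose proof (Hrep F1 fst F1_cont (fun s => eq_refl) (fun s => f_equal fst (Hfix s))) as D1.
  pose proof (Hrep F2 snd F2_cont (fun s => eq_refl) (fun s => f_equal snd (Hfix s))) as D2.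
  eexists (_, _). split; [exact D1|split; [exact D2|]].
  assert (E1 : fst (mu sg) = RInt F1 0 sg / sg^(S m)).
  { rewrite (f_equal fst (Hfix sg)). unfold Phi; simpl fst. apply (scale_int F1 (fun s => Gh s (mu s)) fst); auto. apply F1_cont. }
  assert (E2 : snd (mu sg) = RInt F2 0 sg / sg^(S m)).
  { rewrite (f_equal snd (Hfix sg)). unfold Phi; simpl snd. apply (scale_int F2 (fun s => Gh s (mu s)) snd); auto. apply F2_cont. }
  assert (EF1 : F1 sg = sg^m * fst (Gh sg (mu sg))) by reflexivity.
  assert (EF2 : F2 sg = sg^m * snd (Gh sg (mu sg))) by reflexivity.
  set (I1 := RInt F1 0 sg) in *. set (I2 := RInt F2 0 sg) in *. set (N := INR (S m)) in *.
  rewrite EF1, EF2. clearbody I1 I2. change R in I1. change R in I2.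
  destruct (mu sg) as [u1 u2]. destruct (Gh sg (u1, u2)) as [g1 g2]. cbn [fst snd] in *.
  assert (sg^m <> 0) by (apply pow_nonzero; lra).
  change (sg^(S m)) with (sg * sg^m) in *.
  assert (I1 = u1 * (sg * sg^m)) by (rewrite E1; field; split; lra).
  assert (I2 = u2 * (sg * sg^m)) by (rewrite E2; field; split; lra).
  subst I1 I2.
  unfold RtoC, Cmult, Cminus, Cplus, Copp. cbn [fst snd]. f_equal; field; split; lra.
Qed.
End Deriv.

Definition clamp e s := Rmax 0 (Rmin e s).
Lemma clamp_lip e s s' : Rabs (clamp e s - clamp e s') <= Rabs (s - s').
Proof. unfold clamp, Rmax, Rmin. repeat destruct Rle_dec; unfold Rabs; repeat destruct Rcase_abs; lra. Qed.
Lemma clamp_range e s : 0 <= e -> 0 <= clamp e s <= e.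
Proof. intros. unfold clamp, Rmax, Rmin. repeat destruct Rle_dec; lra. Qed.
Lemma clamp_id e s : 0 <= s <= e -> clamp e s = s.
Proof. intros. unfold clamp, Rmax, Rmin. repeat destruct Rle_dec; lra. Qed.

Lemma Cmod_conj_mult (P z : C) : Cmod P = 1 -> Cmod (Cconj P * z) = Cmod z.
Proof. intros H. rewrite Cmod_mult, Cmod_conj, H. ring. Qed.
Lemma Cmod_P_mult (P z : C) : Cmod P = 1 -> Cmod (P * z) = Cmod z.
Proof. intros H. rewrite Cmod_mult, H. ring. Qed.
Lemma P_conj (P : C) : Cmod P = 1 -> (P * Cconj P)%C = RtoC 1.
Proof. intros H. rewrite <- Cmod2_conj, H. simpl. unfold RtoC. f_equal; ring. Qed.

Section Spec.
Variable alpha : nat -> C.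
Variable m : nat.
Variable P : C.
Variable a : R.
Hypothesis Ha : 0 < a.
Hypothesis HP : Cmod P = 1.

Definition W s y := (Cconj P * ph alpha (S m) s (P * y))%C.
Definition Gt s y := (RtoC (INR (S (S m))) * y - y^(S (S m)) - RtoC (INR (S m)) - RtoC (s / a) * W s y)%C.
Definition Gh e s u := Gt (clamp e s) (1 + u)%C.

Lemma W_lip : exists B L, 0 <= B /\ 0 <= L /\ forall s s' y y', Rabs s <= 1 -> Rabs s' <= 1 -> Cmod y <= 2 -> Cmod y' <= 2 ->
  Cmod (W s y) <= B /\ Cmod (W s y - W s' y') <= L * (Rabs (s - s') + Cmod (y - y')).
Proof.
  destruct (ph_lip alpha (S m) 2 ltac:(lra)) as [B [L [HB [HL H]]]].
  exists B, L. split; auto. split; auto. intros s s' y y' Hs Hs' Hy Hy'.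
  assert (Cmod (P * y) <= 2) by (rewrite Cmod_P_mult; auto).
  assert (Cmod (P * y') <= 2) by (rewrite Cmod_P_mult; auto).
  destruct (H s s' _ _ Hs Hs' H0 H1) as [A1 A2]. unfold W. split.
  - rewrite Cmod_conj_mult; auto.
  - replace (Cconj P * ph alpha (S m) s (P * y) - Cconj P * ph alpha (S m) s' (P * y'))%C
      with (Cconj P * (ph alpha (S m) s (P * y) - ph alpha (S m) s' (P * y')))%C by ring.
    rewrite Cmod_conj_mult; auto.
    replace (P * y - P * y')%C with (P * (y - y'))%C in A2 by ring. rewrite Cmod_P_mult in A2; auto.
Qed.

Lemma consts : exists rho eps Ls, 0 < rho <= 1/2 /\ 0 < eps <= 1 /\ 0 <= Ls /\
  (forall s u u', Cmod u <= rho -> Cmod u' <= rho -> Cmod (Gh eps s u - Gh eps s u') <= 1/4 * Cmod (u - u')) /\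
  (forall s s' u, Cmod u <= rho -> Cmod (Gh eps s u - Gh eps s' u) <= Ls * Rabs (s - s')) /\
  (forall s, Cmod (Gh eps s 0) <= rho / 4).
Proof.
  destruct W_lip as [B [L [HB [HL HW]]]].
  destruct (Dk_bound (S (S m))) as [K [HK HD]].
  set (rho := 1 / (8 * K + 2)).
  assert (Hr : 0 < rho <= 1/2).
  { unfold rho. split. apply Rdiv_lt_0_compat; lra. apply Rmult_le_reg_r with (8*K+2); [lra|]. field_simplify; lra. }
  assert (HKr : K * rho <= 1/8).
  { unfold rho. apply Rmult_le_reg_r with (8*K+2); [lra|]. field_simplify; lra. }
  set (eps := Rmin 1 (Rmin (a / (8 * L + 8)) (rho * a / (4 * B + 4)))).
  assert (He1 : 0 < eps <= 1).
  { unfold eps. split; [|apply Rmin_l]. apply Rmin_glb_lt; [lra|]. apply Rmin_glb_lt; apply Rdiv_lt_0_compat; nra. }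
  assert (He2 : eps * L <= a / 8).
  { assert (eps <= a / (8 * L + 8)) by (unfold eps; eapply Rle_trans; [apply Rmin_r|apply Rmin_l]).
    assert (eps * (8 * L + 8) <= a) by (apply Rmult_le_reg_r with (/ (8*L+8)); [apply Rinv_0_lt_compat; lra|];
      replace (eps * (8 * L + 8) * / (8 * L + 8)) with eps by (field; lra); exact H).
    nra. }
  assert (He3 : eps * B <= rho * a / 4).
  { assert (eps <= rho * a / (4 * B + 4)) by (unfold eps; eapply Rle_trans; [apply Rmin_r|apply Rmin_r]).
    assert (eps * (4 * B + 4) <= rho * a) by (apply Rmult_le_reg_r with (/ (4*B+4)); [apply Rinv_0_lt_compat; lra|];
      replace (eps * (4 * B + 4) * / (4 * B + 4)) with eps by (field; lra); exact H).
    nra. }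
  clearbody eps rho.
  exists rho, eps, ((B + L) / a). split; auto. split; auto. split. { apply Rdiv_le_0_compat; lra. }
  assert (Hy : forall u, Cmod u <= rho -> Cmod ((1 + u) - 1)%C <= rho /\ Cmod (1 + u)%C <= 2).
  { intros u Hu. replace ((1 + u) - 1)%C with u by ring. split; auto.
    eapply Rle_trans; [apply Cmod_triangle|]. rewrite Cmod_1. lra. }
  assert (Hc : forall s, Rabs (clamp eps s) <= 1 /\ 0 <= clamp eps s <= eps).
  { intros s. pose proof (clamp_range eps s ltac:(lra)). split; auto. rewrite Rabs_right; lra. }
  split; [|split].
  - intros s u u' Hu Hu'. unfold Gh, Gt. destruct (Hy u Hu) as [Y1 Y2]. destruct (Hy u' Hu') as [Y1' Y2'].
    set (c := clamp eps s). destruct (Hc s) as [Hc1 Hc2]. fold c in Hc1, Hc2.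
    set (y := (1 + u)%C). set (y' := (1 + u')%C). fold y in Y1, Y2. fold y' in Y1', Y2'.
    replace (RtoC (INR (S (S m))) * y - y ^ S (S m) - RtoC (INR (S m)) - RtoC (c / a) * W c y -
      (RtoC (INR (S (S m))) * y' - y' ^ S (S m) - RtoC (INR (S m)) - RtoC (c / a) * W c y'))%C
      with (- (y ^ S (S m) - y' ^ S (S m) - RtoC (INR (S (S m))) * (y - y')) - RtoC (c / a) * (W c y - W c y'))%C by ring.
    eapply Rle_trans; [apply (Cmod_tri _ (RtoC 0))|].
    replace (- (y ^ S (S m) - y' ^ S (S m) - RtoC (INR (S (S m))) * (y - y')) - RtoC 0)%C
      with (- (y ^ S (S m) - y' ^ S (S m) - RtoC (INR (S (S m))) * (y - y')))%C by ring.
    replace (RtoC 0 - RtoC (c / a) * (W c y - W c y'))%C with (- (RtoC (c / a) * (W c y - W c y')))%C by ring.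
    rewrite !Cmod_opp, Cmod_RtoC_mult.
    assert (Hr' : 0 <= rho <= 1) by lra.
    pose proof (HD rho y y' Hr' Y1 Y1').
    destruct (HW c c y y' Hc1 Hc1 Y2 Y2') as [_ HW2]. replace (c - c) with 0 in HW2 by ring. rewrite Rabs_R0, Rplus_0_l in HW2.
    replace (y - y')%C with (u - u')%C in * by (unfold y, y'; ring).
    rewrite Rabs_right by (apply Rle_ge, Rdiv_le_0_compat; lra).
    pose proof (Cmod_ge_0 (u - u')).
    assert (c / a * Cmod (W c y - W c y') <= eps / a * (L * Cmod (u - u'))).
    { apply Rmult_le_compat; auto. apply Rdiv_le_0_compat; lra. apply Cmod_ge_0.
      unfold Rdiv. apply Rmult_le_compat_r; [left; apply Rinv_0_lt_compat|]; lra. }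
    assert (eps / a * (L * Cmod (u - u')) <= 1/8 * Cmod (u - u')).
    { replace (eps / a * (L * Cmod (u - u'))) with ((eps * L) / a * Cmod (u - u')) by (field; lra).
      apply Rmult_le_compat_r; auto. apply Rmult_le_reg_r with a; auto. field_simplify; lra. }
    assert (K * rho * Cmod (u - u') <= 1/8 * Cmod (u - u')) by (apply Rmult_le_compat_r; auto).
    lra.
  - intros s s' u Hu. unfold Gh, Gt. destruct (Hy u Hu) as [Y1 Y2].
    set (y := (1 + u)%C). fold y in Y1, Y2.
    set (c := clamp eps s). set (c' := clamp eps s').
    destruct (Hc s) as [Hc1 Hc2]. destruct (Hc s') as [Hc1' Hc2']. fold c in Hc1, Hc2. fold c' in Hc1', Hc2'.
    replace (RtoC (INR (S (S m))) * y - y ^ S (S m) - RtoC (INR (S m)) - RtoC (c / a) * W c y -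
      (RtoC (INR (S (S m))) * y - y ^ S (S m) - RtoC (INR (S m)) - RtoC (c' / a) * W c' y))%C
      with (RtoC ((c' - c) / a) * W c y + RtoC (c' / a) * (W c' y - W c y))%C
      by (replace ((c' - c) / a) with (c'/a - c/a) by (field; lra); rewrite RtoC_minus; ring).
    eapply Rle_trans; [apply Cmod_triangle|]. rewrite !Cmod_RtoC_mult.
    destruct (HW c c' y y Hc1 Hc1' Y2 Y2) as [HW1 _].
    destruct (HW c' c y y Hc1' Hc1 Y2 Y2) as [_ HW2].
    replace (y - y)%C with (RtoC 0) in HW2 by ring. rewrite Cmod_0, Rplus_0_r in HW2.
    pose proof (clamp_lip eps s s'). fold c c' in H.
    rewrite Rabs_div by lra. rewrite (Rabs_right a) by lra.
    rewrite (Rabs_right (c' / a)) by (apply Rle_ge, Rdiv_le_0_compat; lra).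
    rewrite Rabs_minus_sym in HW2. rewrite (Rabs_minus_sym c' c).
    assert (Rabs (c - c') / a * Cmod (W c y) <= Rabs (s - s') / a * B).
    { apply Rmult_le_compat; auto. apply Rdiv_le_0_compat; [apply Rabs_pos|lra]. apply Cmod_ge_0.
      unfold Rdiv; apply Rmult_le_compat_r; [left; apply Rinv_0_lt_compat|]; lra. }
    assert (c' / a * Cmod (W c' y - W c y) <= 1 / a * (L * Rabs (s - s'))).
    { apply Rmult_le_compat. apply Rdiv_le_0_compat; lra. apply Cmod_ge_0.
      unfold Rdiv; apply Rmult_le_compat_r; [left; apply Rinv_0_lt_compat|]; lra.
      eapply Rle_trans; [exact HW2|]. apply Rmult_le_compat_l; lra. }
    replace ((B + L) / a * Rabs (s - s')) with (Rabs (s - s') / a * B + 1 / a * (L * Rabs (s - s'))) by (field; lra).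
    lra.
  - intros s. unfold Gh, Gt. destruct (Hc s) as [Hc1 Hc2]. set (c := clamp eps s). fold c in Hc1, Hc2.
    replace (1 + RtoC 0)%C with (RtoC 1) by ring.
    replace (RtoC (INR (S (S m))) * RtoC 1 - RtoC 1 ^ S (S m) - RtoC (INR (S m)) - RtoC (c / a) * W c (RtoC 1))%C
      with (- (RtoC (c / a) * W c (RtoC 1)))%C.
    2:{ rewrite Cpow_1_l. rewrite !S_INR, !RtoC_plus. ring. }
    rewrite Cmod_opp, Cmod_RtoC_mult. rewrite Rabs_right by (apply Rle_ge, Rdiv_le_0_compat; lra).
    assert (Cmod (RtoC 1) <= 2) by (rewrite Cmod_1; lra).
    destruct (HW c c (RtoC 1) (RtoC 1) Hc1 Hc1 H H) as [HW1 _].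
    assert (c / a * Cmod (W c 1) <= eps / a * B).
    { apply Rmult_le_compat. apply Rdiv_le_0_compat; lra. apply Cmod_ge_0.
      unfold Rdiv; apply Rmult_le_compat_r; [left; apply Rinv_0_lt_compat|]; lra. auto. }
    assert (eps / a * B <= rho / 4).
    { replace (eps / a * B) with (eps * B / a) by (field; lra). apply Rmult_le_reg_r with a; auto. field_simplify; lra. }
    lra.
Qed.
End Spec.

Lemma Dm f g x df dg : is_derive f x df -> is_derive g x dg -> is_derive (fun t => f t * g t) x (df * g x + f x * dg).
Proof. intros A B. apply is_derive_Reals. apply is_derive_Reals in A, B. apply (derivable_pt_lim_mult f g); auto. Qed.
Lemma Dp f g x df dg : is_derive f x df -> is_derive g x dg -> is_derive (fun t => f t + g t) x (df + dg).
Proof. intros A B. apply is_derive_Reals. apply is_derive_Reals in A, B. apply (derivable_pt_lim_plus f g); auto. Qed.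
Lemma Dmn f g x df dg : is_derive f x df -> is_derive g x dg -> is_derive (fun t => f t - g t) x (df - dg).
Proof. intros A B. apply is_derive_Reals. apply is_derive_Reals in A, B. apply (derivable_pt_lim_minus f g); auto. Qed.
Lemma Dc f g x df dg : is_derive f (g x) df -> is_derive g x dg -> is_derive (fun t => f (g t)) x (df * dg).
Proof. intros A B. apply is_derive_Reals. apply is_derive_Reals in A, B. apply (derivable_pt_lim_comp g f); auto. Qed.
Lemma Dk (k x : R) : @is_derive R_AbsRing R_NormedModule (fun _ : R => k) x 0.
Proof. apply is_derive_Reals. apply derivable_pt_lim_const. Qed.
Lemma Did (x : R) : @is_derive R_AbsRing R_NormedModule (fun t : R => t) x 1.
Proof. apply is_derive_Reals. apply derivable_pt_lim_id. Qed.
Lemma Dinv f x df : is_derive f x df -> f x <> 0 -> is_derive (fun t => / f t) x (- df / (f x)^2).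
Proof. intros. apply is_derive_inv; auto. Qed.
Lemma Dext (f g : R -> R) (x l l' : R) : (forall t, f t = g t) -> l = l' -> is_derive f x l -> is_derive g x l'.
Proof. intros H -> D. apply (is_derive_ext f g); auto. Qed.

Definition sig (n : nat) (a t : R) := Rpower (INR n * a * (- t)) (/ INR n).

Lemma Rpower_pos x y : 0 < Rpower x y.
Proof. unfold Rpower. apply exp_pos. Qed.

Lemma sig_pos n a t : 0 < Rpower (INR n * a * (- t)) (/ INR n).
Proof. apply Rpower_pos. Qed.

Lemma sig_pow n a t : (0 < n)%nat -> 0 < a -> t < 0 -> (sig n a t)^n = INR n * a * (- t).
Proof.
  intros Hn Ha Ht. unfold sig. assert (0 < INR n) by (apply lt_0_INR; lia).
  rewrite <- Rpower_pow by apply Rpower_pos. rewrite Rpower_mult.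
  replace (/ INR n * INR n) with 1 by (field; lra). apply Rpower_1. apply Rmult_lt_0_compat; [apply Rmult_lt_0_compat|]; lra.
Qed.

Lemma sig_lt n a t e : (0 < n)%nat -> 0 < a -> t < 0 -> 0 < e -> INR n * a * (- t) < e^n -> sig n a t < e.
Proof.
  intros Hn Ha Ht He H. unfold sig. assert (0 < INR n) by (apply lt_0_INR; lia).
  replace e with (Rpower (e^n) (/ INR n)).
  2:{ rewrite <- Rpower_pow by auto. rewrite Rpower_mult. replace (INR n * / INR n) with 1 by (field; lra). apply Rpower_1; auto. }
  apply Rlt_Rpower_l. apply Rinv_0_lt_compat; auto. split; auto. apply Rmult_lt_0_compat; [apply Rmult_lt_0_compat|]; lra.
Qed.

Lemma sig_deriv n a t : (0 < n)%nat -> 0 < a -> t < 0 ->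
  is_derive (sig n a) t (- a * sig n a t / (sig n a t)^n).
Proof.
  intros Hn Ha Ht. assert (0 < INR n) by (apply lt_0_INR; lia).
  set (x := INR n * a * (- t)). assert (Hx : 0 < x) by (unfold x; apply Rmult_lt_0_compat; [apply Rmult_lt_0_compat|]; lra).
  assert (D : is_derive (fun s => Rpower (INR n * a * (- s)) (/ INR n)) t ((/ INR n * Rpower x (/ INR n - 1)) * (INR n * a * (-1)))).
  { apply (Dc (fun u => Rpower u (/ INR n)) (fun s => INR n * a * (- s))).
    - apply is_derive_Reals. apply derivable_pt_lim_power. auto.
    - eapply (Dext (fun s => (INR n * a) * (0 - s)) _ t ((INR n * a) * (0 - 1))).
      intros; ring. ring.
      apply is_derive_scal. apply Dmn; [apply Dk|apply Did]. }
  unfold sig. eapply Dext; [intros; reflexivity| |exact D].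
  fold (sig n a t). rewrite sig_pow by auto. fold x.
  unfold Rminus. rewrite Rpower_plus. rewrite Rpower_Ropp, Rpower_1 by auto. unfold sig. fold x.
  assert (0 < Rpower x (/ INR n)) by apply Rpower_pos. field. split; lra.
Qed.

Lemma sig_small n a e : (0 < n)%nat -> 0 < a -> 0 < e -> exists delta, 0 < delta /\ forall t, - delta < t < 0 -> sig n a t < e.
Proof.
  intros Hn Ha He. assert (0 < INR n) by (apply lt_0_INR; lia).
  exists (e^n / (INR n * a)). split. { apply Rdiv_lt_0_compat; [apply pow_lt; auto| nra]. }
  intros t Ht. apply sig_lt; auto. lra.
  assert (- t < e ^ n / (INR n * a)) by lra.
  apply Rmult_lt_compat_l with (r := INR n * a) in H0; [|nra].
  replace (INR n * a * (e ^ n / (INR n * a))) with (e^n) in H0 by (field; lra). lra.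
Qed.

Lemma Cdiv_helper (k q r : C) : k <> 0%C -> (k * q)%C = r -> q = (/ k * r)%C.
Proof. intros Hk <-. field. auto. Qed.

Lemma Phi_bound_gen m Gh rho Ls kap (Hkap : 0 <= kap <= 1/4)
  (H1 : forall s u u', Cmod u <= rho -> Cmod u' <= rho -> Cmod (Gh s u - Gh s u') <= kap * Cmod (u - u'))
  (H2 : forall s s' u, Cmod u <= rho -> Cmod (Gh s u - Gh s' u) <= Ls * Rabs (s - s'))
  mu (Km : Kc rho Ls mu) sg M :
  (forall r, 0 <= r <= 1 -> Cmod (Gh (sg*r) (mu (sg*r))) <= M) -> Cmod (Phi m Gh mu sg) <= 2 * M.
Proof.
  intros HM.
  assert (E : Phi m Gh mu sg = (Phi m Gh mu sg - (RInt (fun r => (r^m * fst (RtoC 0))%R) 0 1, RInt (fun r => (r^m * snd (RtoC 0))%R) 0 1))%C).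
  { assert (Z1 : RInt (fun r => (r^m * fst (RtoC 0))%R) 0 1 = 0).
    { rewrite (RInt_ext _ (fun _ => 0)). rewrite RInt_const. unfold scal; simpl; unfold mult; simpl; ring.
      intros; simpl; ring. }
    assert (Z2 : RInt (fun r => (r^m * snd (RtoC 0))%R) 0 1 = 0).
    { rewrite (RInt_ext _ (fun _ => 0)). rewrite RInt_const. unfold scal; simpl; unfold mult; simpl; ring.
      intros; simpl; ring. }
    rewrite Z1, Z2. destruct (Phi m Gh mu sg). unfold Cminus, Cplus, Copp; simpl. f_equal; ring. }
  rewrite E. unfold Phi. apply int_bound.
  1: apply (comp_cont1 m Gh rho Ls kap Hkap H1 H2 mu sg Km).
  1: apply (comp_cont2 m Gh rho Ls kap Hkap H1 H2 mu sg Km).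
  1,2: intros; apply cont_mult_pow; apply continuity_pt_const; intros ? ?; reflexivity.
  intros r Hr. rewrite integrand_diff, Cmod_RtoC_mult.
  destruct (pow_le_one r m Hr). rewrite Rabs_right by lra.
  replace (Gh (sg * r)%R (mu (sg * r)%R) - RtoC 0)%C with (Gh (sg * r)%R (mu (sg * r)%R)) by ring.
  pose proof (HM r Hr). pose proof (Cmod_ge_0 (Gh (sg * r)%R (mu (sg * r)%R))).
  assert (0 <= M) by lra. nra.
Qed.

Section Local.
Variable alpha : nat -> C.
Variable m : nat.
Variable P : C.
Variable a : R.
Hypothesis Ha : 0 < a.
Hypothesis HP : Cmod P = 1.
Hypothesis Hlead : (alpha (S (S m)) * P^(S (S m)) = RtoC a * P)%C.

Lemma cpoly_Z sg y : sg <> 0 ->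
  cpoly alpha (S (S m)) (RtoC (/ sg) * (P * y))%C =
  (RtoC (/ sg^(S (S m))) * (P * (RtoC a * y^(S (S m)) + RtoC sg * W alpha m P sg y)))%C.
Proof.
  intros Hs. pose proof (ph_cpoly alpha (S (S m)) sg (P * y) Hs) as E.
  assert (Hs' : RtoC sg <> 0%C) by (intro Q; apply Hs; injection Q; auto).
  assert (Hp : sg^(S (S m)) <> 0) by (apply pow_nonzero; auto).
  assert (Hp' : RtoC (sg^(S (S m))) <> 0%C) by (intro Q; apply Hp; injection Q; auto).
  replace (RtoC (/ sg) * (P * y))%C with (P * y / RtoC sg)%C by (rewrite RtoC_inv by auto; unfold Cdiv; ring).
  rewrite (RtoC_inv (sg ^ S (S m))) by auto.
  apply (Cdiv_helper (RtoC (sg ^ S (S m)))); auto.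
  rewrite E.
  change (ph alpha (S (S m)) sg (P*y)) with (RtoC sg * ph alpha (S m) sg (P*y) + alpha (S (S m)) * (P*y)^(S (S m)))%C.
  unfold W. rewrite (Cpow_mult_l P y).
  replace (alpha (S (S m)) * (P ^ S (S m) * y ^ S (S m)))%C with ((alpha (S (S m)) * P ^ S (S m)) * y ^ S (S m))%C by ring.
  rewrite Hlead. 
  replace (P * (RtoC a * y ^ S (S m) + RtoC sg * (Cconj P * ph alpha (S m) sg (P * y))))%C
    with ((P * Cconj P) * RtoC sg * ph alpha (S m) sg (P * y) + RtoC a * P * y ^ S (S m))%C by ring.
  rewrite P_conj by auto. ring.
Qed.


Lemma Gh00 eps : 0 <= eps -> Gh alpha m P a eps 0 (RtoC 0) = RtoC 0.
Proof.
  intros He. unfold Gh, Gt. rewrite clamp_id by lra. replace (0 / a) with 0 by (field; lra).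
  replace (1 + RtoC 0)%C with (RtoC 1) by ring. rewrite Cpow_1_l. rewrite !S_INR, !RtoC_plus. ring.
Qed.

Lemma pair_eq (z w : C) : fst z = fst w -> snd z = snd w -> z = w.
Proof. destruct z, w; simpl; intros -> ->; reflexivity. Qed.

Section Sol.
Variables rho eps Ls : R.
Hypothesis Hr : 0 < rho <= 1/2.
Hypothesis He : 0 < eps <= 1.
Hypothesis HLs : 0 <= Ls.
Hypothesis G1 : forall s u u', Cmod u <= rho -> Cmod u' <= rho -> Cmod (Gh alpha m P a eps s u - Gh alpha m P a eps s u') <= 1/4 * Cmod (u - u').
Hypothesis G2 : forall s s' u, Cmod u <= rho -> Cmod (Gh alpha m P a eps s u - Gh alpha m P a eps s' u) <= Ls * Rabs (s - s').
Variable mu : R -> C.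
Hypothesis Km : Kc rho Ls mu.
Hypothesis Hfix : forall s, mu s = Phi m (Gh alpha m P a eps) mu s.

Definition T0 := - (eps^(S m) / (INR (S m) * a)).
Definition Zs (t : R) : C := (RtoC (/ sig (S m) a t) * (P * (1 + mu (sig (S m) a t))))%C.

Lemma T0_neg : T0 < 0.
Proof. unfold T0. assert (0 < INR (S m)) by (apply lt_0_INR; lia).
  assert (0 < eps^(S m)) by (apply pow_lt; lra).
  assert (0 < eps ^ S m / (INR (S m) * a)) by (apply Rdiv_lt_0_compat; nra). lra. Qed.

Lemma sig_range t : T0 < t < 0 -> 0 < sig (S m) a t < eps.
Proof.
  intros Ht. split; [apply sig_pos|]. apply sig_lt; try lia; try lra.
  unfold T0 in Ht. assert (0 < INR (S m)) by (apply lt_0_INR; lia).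
  assert (- t < eps ^ S m / (INR (S m) * a)) by lra.
  apply Rmult_lt_compat_l with (r := INR (S m) * a) in H0; [|nra].
  replace (INR (S m) * a * (eps ^ S m / (INR (S m) * a))) with (eps^(S m)) in H0 by (field; lra). lra.
Qed.

Lemma Zs_ode t : T0 < t < 0 ->
  is_derive (fun s => fst (Zs s)) t (fst (cpoly alpha (S (S m)) (Zs t))) /\
  is_derive (fun s => snd (Zs s)) t (snd (cpoly alpha (S (S m)) (Zs t))).
Proof.
  intros Ht. pose proof (sig_range t Ht) as [Hs1 Hs2]. set (sg := sig (S m) a t) in *.
  destruct (deriv_fixed m (Gh alpha m P a eps) rho Ls (1/4) ltac:(lra) G1 G2 mu Km Hfix sg Hs1) as [dmu [D1 [D2 E]]].
  pose proof (sig_deriv (S m) a t ltac:(lia) Ha (proj2 Ht)) as DS. fold sg in DS.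
  assert (Hsg : sg <> 0) by lra.
  assert (Hsn : sg ^ S m <> 0) by (apply pow_nonzero; lra).
  set (sd := - a * sg / sg ^ S m) in DS.
  assert (DI : is_derive (fun s => / sig (S m) a s) t (- sd / sg^2)) by (apply Dinv; auto).
  assert (DM1 : is_derive (fun s => fst (mu (sig (S m) a s))) t (fst dmu * sd)) by (apply (Dc (fun u => fst (mu u))); auto).
  assert (DM2 : is_derive (fun s => snd (mu (sig (S m) a s))) t (snd dmu * sd)) by (apply (Dc (fun u => snd (mu u))); auto).
  assert (Gid : Gh alpha m P a eps sg (mu sg) = Gt alpha m P a sg (1 + mu sg)%C) by (unfold Gh; rewrite clamp_id by lra; reflexivity).
  set (y := (1 + mu sg)%C). set (Y := (y ^ S (S m))%C). set (Wv := W alpha m P sg y).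
  assert (E2 : (RtoC sg * dmu = y - Y - RtoC (sg / a) * Wv)%C).
  { rewrite E, Gid. unfold Gt. fold y Y Wv. unfold y. rewrite !S_INR, !RtoC_plus. ring. }
  pose proof (f_equal fst E2) as E21. pose proof (f_equal snd E2) as E22.
  pose proof (cpoly_Z sg y Hsg) as CZ. fold Y Wv in CZ.
  assert (EZ : Zs t = (RtoC (/ sg) * (P * y))%C) by reflexivity.
  rewrite EZ, CZ.
  assert (DZ1 : is_derive (fun s => (/ sig (S m) a s) * (fst P * (1 + fst (mu (sig (S m) a s))) - snd P * (0 + snd (mu (sig (S m) a s))))) t
     ((- sd / sg^2) * (fst P * (1 + fst (mu sg)) - snd P * (0 + snd (mu sg))) + (/ sg) * (fst P * (0 + fst dmu * sd) - snd P * (0 + snd dmu * sd)))).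
  { eapply Dext; [intros; reflexivity| |apply Dm; [exact DI|apply Dmn; apply is_derive_scal; apply Dp; [apply Dk|exact DM1|apply Dk|exact DM2]]].
    cbv beta. fold sg. ring. }
  assert (DZ2 : is_derive (fun s => (/ sig (S m) a s) * (fst P * (0 + snd (mu (sig (S m) a s))) + snd P * (1 + fst (mu (sig (S m) a s))))) t
     ((- sd / sg^2) * (fst P * (0 + snd (mu sg)) + snd P * (1 + fst (mu sg))) + (/ sg) * (fst P * (0 + snd dmu * sd) + snd P * (0 + fst dmu * sd)))).
  { eapply Dext; [intros; reflexivity| |apply Dm; [exact DI|apply Dp; apply is_derive_scal; apply Dp; [apply Dk|exact DM2|apply Dk|exact DM1]]].
    cbv beta. fold sg. ring. }
  assert (Ee1 : fst dmu = (fst y - fst Y - sg / a * fst Wv) / sg).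
  { assert (sg * fst dmu = fst y - fst Y - sg / a * fst Wv) by (simpl in E21 |- *; lra). rewrite <- H. field; auto. }
  assert (Ee2 : snd dmu = (snd y - snd Y - sg / a * snd Wv) / sg).
  { assert (sg * snd dmu = snd y - snd Y - sg / a * snd Wv) by (simpl in E22 |- *; lra). rewrite <- H. field; auto. }
  assert (Fy : fst y = 1 + fst (mu sg)) by reflexivity.
  assert (Sy : snd y = 0 + snd (mu sg)) by reflexivity.
  rewrite Fy in Ee1. rewrite Sy in Ee2.
  clearbody y Y Wv. 
  split.
  - eapply Dext; [| |exact DZ1].
    + intros s. unfold Zs. destruct P. simpl. ring.
    + rewrite Ee1, Ee2. unfold sd. change (sg^(S (S m))) with (sg * sg^(S m)). 
      destruct P, Y, Wv. simpl. assert (sg^m <> 0) by (apply pow_nonzero; lra). field. repeat split; try lra; auto.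
  - eapply Dext; [| |exact DZ2].
    + intros s. unfold Zs. destruct P. simpl. ring.
    + rewrite Ee1, Ee2. unfold sd. change (sg^(S (S m))) with (sg * sg^(S m)). 
      destruct P, Y, Wv. simpl. assert (sg^m <> 0) by (apply pow_nonzero; lra). field. repeat split; try lra; auto.
Qed.

Lemma mu0 : mu 0 = RtoC 0.
Proof.
  assert (B : Cmod (mu 0) <= 2 * (1/4 * Cmod (mu 0))).
  { rewrite Hfix at 1. apply (Phi_bound_gen m _ rho Ls (1/4) ltac:(lra) G1 G2 mu Km 0).
    intros r Hr0. rewrite Rmult_0_l.
    replace (Gh alpha m P a eps 0 (mu 0)) with (Gh alpha m P a eps 0 (mu 0) - Gh alpha m P a eps 0 (RtoC 0))%C
      by (rewrite Gh00 by lra; ring).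
    replace (Cmod (mu 0)) with (Cmod (mu 0 - RtoC 0)) by (f_equal; ring).
    apply G1. apply (proj1 Km). rewrite Cmod_0; lra. }
  pose proof (Cmod_ge_0 (mu 0)). apply Cmod_eq_0. lra.
Qed.

Lemma mu_small s : 0 <= s -> Cmod (mu s) <= Lam Ls * s.
Proof. intros Hs. replace (mu s) with (mu s - mu 0)%C by (rewrite mu0; ring).
  eapply Rle_trans; [apply (proj2 Km)|]. replace (s - 0) with s by ring. rewrite Rabs_right; lra. Qed.

Lemma Cmod_rev (u v : C) : Rabs (Cmod u - Cmod v) <= Cmod (u - v).
Proof.
  assert (Cmod u <= Cmod (u - v) + Cmod v) by (replace u with ((u - v) + v)%C at 1 by ring; apply Cmod_triangle).
  assert (Cmod v <= Cmod (v - u) + Cmod u) by (replace v with ((v - u) + u)%C at 1 by ring; apply Cmod_triangle).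
  rewrite (Cmod_sym v u) in H0. unfold Rabs. destruct Rcase_abs; lra.
Qed.

Lemma y_bounds t : T0 < t < 0 -> Cmod (1 + mu (sig (S m) a t))%C >= 1/2 /\ Cmod ((1 + mu (sig (S m) a t)) - 1)%C <= Lam Ls * sig (S m) a t
  /\ Cmod (mu (sig (S m) a t)) <= rho.
Proof.
  intros Ht. pose proof (sig_range t Ht). set (sg := sig (S m) a t) in *.
  pose proof (proj1 Km sg). replace ((1 + mu sg) - 1)%C with (mu sg) by ring.
  split; [|split; auto; apply mu_small; lra].
  pose proof (Cmod_rev (1 + mu sg)%C (RtoC 1)). replace ((1 + mu sg) - 1)%C with (mu sg) in H1 by ring.
  rewrite Cmod_1 in H1. unfold Rabs in H1. destruct Rcase_abs in H1; lra.
Qed.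

Lemma Zs_mod t : T0 < t < 0 -> Cmod (Zs t) = Cmod (1 + mu (sig (S m) a t))%C / sig (S m) a t.
Proof.
  intros Ht. pose proof (sig_range t Ht). unfold Zs. rewrite Cmod_RtoC_mult, Cmod_P_mult by auto.
  rewrite Rabs_right by (apply Rle_ge; left; apply Rinv_0_lt_compat; lra). unfold Rdiv. ring.
Qed.

Lemma Zs_big M : exists delta, delta > 0 /\ forall t, T0 < t < 0 -> - delta < t -> Cmod (Zs t) > M.
Proof.
  destruct (sig_small (S m) a (1 / (2 * (Rabs M + 1))) ltac:(lia) Ha) as [d [Hd Hsd]].
  { pose proof (Rabs_pos M). apply Rdiv_lt_0_compat; lra. }
  exists d. split; auto. intros t Ht Htd.
  rewrite Zs_mod by auto. destruct (y_bounds t Ht) as [Y1 _].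
  pose proof (sig_range t Ht). specialize (Hsd t ltac:(lra)).
  set (sg := sig (S m) a t) in *. set (c := Cmod (1 + mu sg)%C) in *.
  pose proof (Rabs_pos M). pose proof (Rle_abs M).
  assert (sg * (2 * (Rabs M + 1)) < 1).
  { apply Rmult_lt_reg_r with (/ (2 * (Rabs M + 1))). apply Rinv_0_lt_compat; lra.
    replace (sg * (2 * (Rabs M + 1)) * / (2 * (Rabs M + 1))) with sg by (field; lra). lra. }
  apply Rlt_gt. apply Rmult_lt_reg_r with sg; [lra|]. unfold Rdiv. rewrite Rmult_assoc, Rinv_l by lra. nra.
Qed.

Lemma Zs_dir e : e > 0 -> exists delta, delta > 0 /\ forall t, T0 < t < 0 -> - delta < t ->
  cnorm (fst (Zs t) / cnorm (Zs t) - fst P, snd (Zs t) / cnorm (Zs t) - snd P) < e.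
Proof.
  intros He'. 
  assert (HL : 0 <= Lam Ls) by (unfold Lam; lra).
  destruct (sig_small (S m) a (e / (4 * Lam Ls + 1)) ltac:(lia) Ha) as [d [Hd Hsd]].
  { apply Rdiv_lt_0_compat; lra. }
  exists d. split; auto. intros t Ht Htd. change cnorm with Cmod.
  pose proof (Zs_mod t Ht) as ZM. destruct (y_bounds t Ht) as [Y1 [Y2 _]].
  pose proof (sig_range t Ht). specialize (Hsd t ltac:(lra)).
  set (sg := sig (S m) a t) in *. set (y := (1 + mu sg)%C) in *.
  assert (Ez : Zs t = (RtoC (/ sg) * (P * y))%C) by reflexivity.
  set (c := Cmod (Zs t)) in *.
  assert (Hc : 0 < c) by (rewrite ZM; apply Rdiv_lt_0_compat; lra).
  assert (Hy : 0 < Cmod y) by lra.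
  assert (Ep : (fst (Zs t) / c - fst P, snd (Zs t) / c - snd P) = (P * (RtoC (/ Cmod y) * y - 1))%C).
  { rewrite Ez. rewrite ZM. destruct P as [p1 p2]. destruct y as [y1 y2]. apply pair_eq; simpl; field; lra. }
  rewrite Ep, Cmod_P_mult by auto.
  replace (RtoC (/ Cmod y) * y - 1)%C with (RtoC (/ Cmod y) * (y - RtoC (Cmod y)))%C
    by (rewrite RtoC_inv by lra; field; intro Q; injection Q; lra).
  rewrite Cmod_RtoC_mult, Rabs_right by (apply Rle_ge; left; apply Rinv_0_lt_compat; lra).
  assert (Cmod (y - RtoC (Cmod y)) <= 2 * (Lam Ls * sg)).
  { eapply Rle_trans; [apply (Cmod_tri _ (RtoC 1))|].
    replace (RtoC 1 - RtoC (Cmod y))%C with (RtoC (1 - Cmod y)) by (rewrite RtoC_minus; reflexivity).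
    rewrite Cmod_R. pose proof (Cmod_rev y (RtoC 1)). rewrite Cmod_1 in H0.
    rewrite Rabs_minus_sym. lra. }
  assert (Hi : / Cmod y <= 2).
  { replace 2 with (/ (1/2)) by field. apply Rinv_le_contravar; lra. }
  assert (sg * (4 * Lam Ls + 1) < e).
  { apply Rmult_lt_reg_r with (/ (4 * Lam Ls + 1)). apply Rinv_0_lt_compat; lra.
    replace (sg * (4 * Lam Ls + 1) * / (4 * Lam Ls + 1)) with sg by (field; lra). unfold Rdiv in Hsd. lra. }
  pose proof (Cmod_ge_0 (y - RtoC (Cmod y))).
  assert (/ Cmod y * Cmod (y - RtoC (Cmod y)) <= 2 * (2 * (Lam Ls * sg))).
  { apply Rmult_le_compat; auto. left; apply Rinv_0_lt_compat; lra. }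
  lra.
Qed.
End Sol.

Theorem local_sol : exists T0 (Z : R -> C), T0 < 0 /\
  (forall t, T0 < t < 0 -> derivable_pt_lim (fun s => fst (Z s)) t (fst (cpoly alpha (S (S m)) (Z t))) /\
                          derivable_pt_lim (fun s => snd (Z s)) t (snd (cpoly alpha (S (S m)) (Z t)))) /\
  (forall M, exists delta, delta > 0 /\ forall t, T0 < t < 0 -> - delta < t -> Cmod (Z t) > M) /\
  (forall e, e > 0 -> exists delta, delta > 0 /\ forall t, T0 < t < 0 -> - delta < t ->
     cnorm (fst (Z t) / cnorm (Z t) - fst P, snd (Z t) / cnorm (Z t) - snd P) < e).
Proof.
  destruct (consts alpha m P a Ha HP) as [rho [eps [Ls [Hr [He [HLs [G1 [G2 G3]]]]]]]].
  destruct (picard_exists m (Gh alpha m P a eps) rho Ls (1/4) (proj1 Hr) HLs ltac:(lra) G1 G2 G3) as [mu [Km Hfix]].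
  exists (T0 eps), (Zs mu). split; [apply T0_neg; lra|]. split; [|split].
  - intros t Ht. assert (A := Zs_ode rho eps Ls He G1 G2 mu Km Hfix t Ht). destruct A as [A B].
    split; apply is_derive_Reals; assumption.
  - intros M. eapply Zs_big; eauto.
  - intros e He'. eapply Zs_dir; eauto.
Qed.
End Local.

Lemma cpoly_lip alpha k X : 0 <= X -> exists L, 0 <= L /\ forall z w, Cmod z <= X -> Cmod w <= X ->
  Cmod (cpoly alpha k z - cpoly alpha k w) <= L * Cmod (z - w).
Proof.
  intros HX. induction k as [|k [L [HL IH]]].
  - exists 0. split; [lra|]. intros. rewrite !cpoly_0. replace (alpha O - alpha O)%C with (RtoC 0) by ring.
    rewrite Cmod_0. pose proof (Cmod_ge_0 (z - w)). lra.
  - destruct (Cpow_lip (S k) X HX) as [Lp [HLp Hp]].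
    exists (L + Cmod (alpha (S k)) * Lp). pose proof (Cmod_ge_0 (alpha (S k))). split; [nra|].
    intros z w Hz Hw. rewrite !cpoly_S.
    replace (cpoly alpha k z + alpha (S k) * z ^ S k - (cpoly alpha k w + alpha (S k) * w ^ S k))%C
      with ((cpoly alpha k z - cpoly alpha k w) + alpha (S k) * (z ^ S k - w ^ S k))%C by ring.
    eapply Rle_trans; [apply Cmod_triangle|]. rewrite Cmod_mult.
    pose proof (IH z w Hz Hw). pose proof (Hp z w Hz Hw). pose proof (Cmod_ge_0 (z - w)).
    assert (Cmod (alpha (S k)) * Cmod (z ^ S k - w ^ S k) <= Cmod (alpha (S k)) * (Lp * Cmod (z - w))) by (apply Rmult_le_compat_l; auto).
    nra.
Qed.

Lemma in_int_convex lo hi x y c : in_int lo hi x -> in_int lo hi y -> x <= c <= y -> in_int lo hi c.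
Proof. unfold in_int. destruct lo, hi; intuition lra. Qed.

Lemma cont_bound f a b : a <= b -> (forall c, a <= c <= b -> continuity_pt f c) -> exists B, forall c, a <= c <= b -> Rabs (f c) <= B.
Proof.
  intros Hab Hc. destruct (continuity_ab_maj f a b Hab Hc) as [M [HM _]].
  destruct (continuity_ab_min f a b Hab Hc) as [N [HN _]].
  exists (Rabs (f M) + Rabs (f N)). intros c Hc'. specialize (HM c Hc'). specialize (HN c Hc').
  unfold Rabs in *. repeat destruct Rcase_abs; lra.
Qed.

Lemma dpl_cont f t l : derivable_pt_lim f t l -> continuity_pt f t.
Proof. intros H. apply derivable_continuous_pt. exists l. exact H. Qed.

Lemma Dexp c x : is_derive (fun s => exp (c * s)) x (exp (c * x) * c).
Proof. assert (A1 := is_derive_exp (c * x)). assert (A2 := is_derive_scal (fun s => s) x c 1 (Did x)).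
  assert (A3 := Dc exp (fun s => c * s) x _ _ A1 A2). eapply Dext; [intros; reflexivity| |exact A3]. cbv beta; ring. Qed.
Lemma Cexp c x : continuity_pt (fun s => exp (c * s)) x.
Proof. eapply dpl_cont. apply is_derive_Reals. apply Dexp. Qed.

Definition solves (alpha : nat -> C) d lo hi (w : R -> C) :=
  forall t, in_int lo hi t ->
    derivable_pt_lim (fun s => fst (w s)) t (fst (cpoly alpha d (w t))) /\
    derivable_pt_lim (fun s => snd (w s)) t (snd (cpoly alpha d (w t))).

Lemma Cmod_sq (z : C) : Cmod z ^ 2 = fst z ^ 2 + snd z ^ 2.
Proof. unfold Cmod. rewrite pow2_sqrt; auto. pose proof (pow2_ge_0 (fst z)). pose proof (pow2_ge_0 (snd z)). lra. Qed.

Lemma uniq alpha d lo hi w1 w2 : solves alpha d lo hi w1 -> solves alpha d lo hi w2 ->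
  forall t0, in_int lo hi t0 -> w1 t0 = w2 t0 -> forall t, in_int lo hi t -> w1 t = w2 t.
Proof.
  intros S1 S2 t0 H0 E0 t Ht.
  set (a := Rmin t0 t). set (b := Rmax t0 t).
  assert (Hab : a <= b) by (unfold a, b, Rmin, Rmax; destruct Rle_dec; lra).
  assert (Iab : forall c, a <= c <= b -> in_int lo hi c).
  { intros c Hc. unfold a, b, Rmin, Rmax in Hc. destruct Rle_dec.
    - apply (in_int_convex lo hi t0 t); auto. - apply (in_int_convex lo hi t t0); auto; lra. }
  assert (Bd : forall (g : R -> R), (forall c, a <= c <= b -> continuity_pt g c) -> exists B, forall c, a <= c <= b -> Rabs (g c) <= B).
  { intros g Hg. apply cont_bound; auto. }
  destruct (Bd (fun s => fst (w1 s))) as [B1 HB1]. { intros c Hc. eapply dpl_cont. apply (S1 c (Iab c Hc)). }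
  destruct (Bd (fun s => snd (w1 s))) as [B2 HB2]. { intros c Hc. eapply dpl_cont. apply (S1 c (Iab c Hc)). }
  destruct (Bd (fun s => fst (w2 s))) as [B3 HB3]. { intros c Hc. eapply dpl_cont. apply (S2 c (Iab c Hc)). }
  destruct (Bd (fun s => snd (w2 s))) as [B4 HB4]. { intros c Hc. eapply dpl_cont. apply (S2 c (Iab c Hc)). }
  set (X := Rabs B1 + Rabs B2 + Rabs B3 + Rabs B4).
  assert (HX : 0 <= X) by (unfold X; pose proof (Rabs_pos B1); pose proof (Rabs_pos B2); pose proof (Rabs_pos B3); pose proof (Rabs_pos B4); lra).
  assert (Xb1 : forall c, a <= c <= b -> Cmod (w1 c) <= X).
  { intros c Hc. eapply Rle_trans; [apply Cmod_le_sum|]. specialize (HB1 c Hc). specialize (HB2 c Hc).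
    pose proof (Rle_abs B1). pose proof (Rle_abs B2). pose proof (Rabs_pos B3). pose proof (Rabs_pos B4). unfold X. lra. }
  assert (Xb2 : forall c, a <= c <= b -> Cmod (w2 c) <= X).
  { intros c Hc. eapply Rle_trans; [apply Cmod_le_sum|]. specialize (HB3 c Hc). specialize (HB4 c Hc).
    pose proof (Rle_abs B3). pose proof (Rle_abs B4). pose proof (Rabs_pos B1). pose proof (Rabs_pos B2). unfold X. lra. }
  destruct (cpoly_lip alpha d X HX) as [L [HL HLip]].
  set (D := fun s => (fst (w1 s) - fst (w2 s))^2 + (snd (w1 s) - snd (w2 s))^2).
  set (dD := fun s => 2 * (fst (w1 s) - fst (w2 s)) * (fst (cpoly alpha d (w1 s)) - fst (cpoly alpha d (w2 s)))
                    + 2 * (snd (w1 s) - snd (w2 s)) * (snd (cpoly alpha d (w1 s)) - snd (cpoly alpha d (w2 s)))).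
  assert (DD : forall c, in_int lo hi c -> is_derive D c (dD c)).
  { intros c Hc. destruct (S1 c Hc) as [A1 A2]. destruct (S2 c Hc) as [A3 A4].
    apply is_derive_Reals in A1, A2, A3, A4.
    unfold D, dD. eapply Dext; [intros; reflexivity| |].
    2:{ apply Dp; apply (is_derive_pow (fun s => _ - _) 2); apply Dmn; eassumption. }
    simpl. ring. }
  assert (DDc : forall c, in_int lo hi c -> continuity_pt D c).
  { intros c Hc. apply derivable_continuous_pt. exists (dD c). apply is_derive_Reals. auto. }
  assert (Dnn : forall s, 0 <= D s) by (intros; unfold D; pose proof (pow2_ge_0 (fst (w1 s) - fst (w2 s))); pose proof (pow2_ge_0 (snd (w1 s) - snd (w2 s))); lra).
  set (K := 4 * L).
  assert (dDb : forall c, a <= c <= b -> Rabs (dD c) <= K * D c).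
  { intros c Hc. specialize (HLip _ _ (Xb1 c Hc) (Xb2 c Hc)).
    set (z := (w1 c - w2 c)%C). set (g := (cpoly alpha d (w1 c) - cpoly alpha d (w2 c))%C) in *.
    assert (Ez : D c = Cmod z ^ 2) by (rewrite Cmod_sq; reflexivity).
    assert (Eg : dD c = 2 * fst z * fst g + 2 * snd z * snd g) by reflexivity.
    rewrite Ez, Eg. fold z in HLip.
    pose proof (Cmod_re z). pose proof (Cmod_im z). pose proof (Cmod_re g). pose proof (Cmod_im g).
    pose proof (Cmod_ge_0 z). pose proof (Cmod_ge_0 g).
    assert (Rabs (2 * fst z * fst g + 2 * snd z * snd g) <= 2 * Cmod z * Cmod g + 2 * Cmod z * Cmod g).
    { eapply Rle_trans; [apply Rabs_triang|]. rewrite !Rabs_mult. rewrite Rabs_right by lra.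
      assert (Rabs (fst z) * Rabs (fst g) <= Cmod z * Cmod g) by (apply Rmult_le_compat; auto; apply Rabs_pos).
      assert (Rabs (snd z) * Rabs (snd g) <= Cmod z * Cmod g) by (apply Rmult_le_compat; auto; apply Rabs_pos).
      lra. }
    assert (Cmod z * Cmod g <= Cmod z * (L * Cmod z)) by (apply Rmult_le_compat_l; auto).
    unfold K. assert (4 * L * Cmod z ^ 2 = 4 * (Cmod z * (L * Cmod z))) by ring. lra. }
  assert (Dt0 : D t0 = 0) by (unfold D; rewrite E0; ring).
  assert (DT : D t = 0).
  { destruct (Rle_dec t0 t) as [Hle|Hlt].
    - set (E := fun s => D s * exp (- K * s)).
      destruct (MVT_gen E t0 t (fun s => dD s * exp (- K * s) + D s * (exp (- K * s) * (- K)))) as [c [Hc HE]].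
      + intros x Hx. unfold E.
        assert (Ix : in_int lo hi x) by (apply Iab; unfold a, b; lra).
        assert (DE : is_derive (fun s => exp (- K * s)) x (exp (- K * x) * (- K))).
        { assert (A1 := is_derive_exp (- K * x)). assert (A2 := is_derive_scal (fun s => s) x (- K) 1 (Did x)).
          assert (A3 := Dc exp (fun s => - K * s) x _ _ A1 A2). eapply Dext; [intros; reflexivity| |exact A3]. cbv beta; ring. }
        assert (A4 := Dm D (fun s => exp (- K * s)) x _ _ (DD x Ix) DE). eapply Dext; [intros; reflexivity| |exact A4]. cbv beta; ring.
      + intros x Hx. unfold E. apply continuity_pt_mult. apply DDc, Iab. unfold a, b; lra.
        apply Cexp.
      + unfold E in HE. rewrite Dt0 in HE.
        assert (Hc' : a <= c <= b) by (unfold a, b, Rmin, Rmax in *; destruct Rle_dec; lra).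
        pose proof (dDb c Hc'). pose proof (Rle_abs (dD c)). pose proof (exp_pos (- K * c)). pose proof (exp_pos (- K * t)).
        assert (dD c * exp (- K * c) + D c * (exp (- K * c) * - K) <= 0).
        { replace (dD c * exp (- K * c) + D c * (exp (- K * c) * - K)) with ((dD c - K * D c) * exp (- K * c)) by ring.
          apply Rmult_le_0_r; lra. }
        assert (D t * exp (- K * t) <= 0) by nra.
        pose proof (Dnn t). nra.
    - set (E := fun s => D s * exp (K * s)).
      destruct (MVT_gen E t t0 (fun s => dD s * exp (K * s) + D s * (exp (K * s) * K))) as [c [Hc HE]].
      + intros x Hx. unfold E.
        assert (Ix : in_int lo hi x) by (apply Iab; unfold a, b; rewrite Rmin_comm, Rmax_comm; lra).
        assert (DE : is_derive (fun s => exp (K * s)) x (exp (K * x) * K)).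
        { assert (A1 := is_derive_exp (K * x)). assert (A2 := is_derive_scal (fun s => s) x K 1 (Did x)).
          assert (A3 := Dc exp (fun s => K * s) x _ _ A1 A2). eapply Dext; [intros; reflexivity| |exact A3]. cbv beta; ring. }
        assert (A4 := Dm D (fun s => exp (K * s)) x _ _ (DD x Ix) DE). eapply Dext; [intros; reflexivity| |exact A4]. cbv beta; ring.
      + intros x Hx. unfold E. apply continuity_pt_mult. apply DDc, Iab. unfold a, b; rewrite Rmin_comm, Rmax_comm; lra.
        apply Cexp.
      + unfold E in HE. rewrite Dt0 in HE.
        assert (Hc' : a <= c <= b) by (unfold a, b, Rmin, Rmax in *; destruct Rle_dec; destruct Rle_dec; lra).
        pose proof (dDb c Hc'). pose proof (Rle_abs (- dD c)). rewrite Rabs_Ropp in H1. pose proof (exp_pos (K * c)). pose proof (exp_pos (K * t)).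
        assert (0 <= dD c * exp (K * c) + D c * (exp (K * c) * K)).
        { replace (dD c * exp (K * c) + D c * (exp (K * c) * K)) with ((dD c + K * D c) * exp (K * c)) by ring.
          apply Rmult_le_pos; lra. }
        assert (D t * exp (K * t) <= 0) by nra.
        pose proof (Dnn t). nra. }
  assert (Ez : Cmod (w1 t - w2 t) = 0).
  { assert (Cmod (w1 t - w2 t) ^ 2 = 0) by (rewrite Cmod_sq; exact DT).
    pose proof (Cmod_ge_0 (w1 t - w2 t)). nra. }
  apply Cmod_eq_0 in Ez. replace (w1 t) with ((w1 t - w2 t) + w2 t)%C by ring. rewrite Ez. ring.
Qed.

Lemma solves_sub alpha d lo hi lo' hi' w : solves alpha d lo hi w -> (forall t, in_int lo' hi' t -> in_int lo hi t) -> solves alpha d lo' hi' w.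
Proof. intros H Hs t Ht. apply H, Hs, Ht. Qed.

Definition lmax (l1 l2 : option R) : option R :=
  match l1, l2 with
  | Some a, Some b => Some (Rmax a b)
  | Some a, None => Some a
  | None, Some b => Some b
  | None, None => None
  end.

Lemma in_int_lmax l1 l2 hi t : in_int (lmax l1 l2) hi t <-> in_int l1 hi t /\ in_int l2 hi t.
Proof. unfold in_int, lmax. destruct l1, l2, hi; unfold Rmax; try destruct Rle_dec; intuition lra. Qed.

Lemma dpl_ext_loc (f g : R -> R) t l d : 0 < d -> (forall s, t - d < s < t + d -> f s = g s) -> derivable_pt_lim f t l -> derivable_pt_lim g t l.
Proof.
  intros Hd He H. apply is_derive_Reals. apply is_derive_Reals in H. apply (is_derive_ext_loc f g); auto.
  exists (mkposreal d Hd). intros s Hs. unfold ball in Hs; simpl in Hs. unfold AbsRing_ball, abs, minus, plus, opp in Hs; simpl in Hs.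
  apply Rabs_def2 in Hs. apply He. lra.
Qed.

Lemma open_nbhd lo hi t : in_int lo hi t -> exists d, 0 < d /\ forall s, t - d < s < t + d -> in_int lo hi s.
Proof.
  intros H. unfold in_int in *. destruct lo as [l|], hi as [h|]; destruct H as [H1 H2].
  - exists (Rmin (t - l) (h - t)). split. apply Rmin_glb_lt; lra. intros s Hs. pose proof (Rmin_l (t-l) (h-t)). pose proof (Rmin_r (t-l) (h-t)). lra.
  - exists (t - l). split; [lra|]. intros; split; auto; lra.
  - exists (h - t). split; [lra|]. intros; split; auto; lra.
  - exists 1. split; [lra|]. intros; split; auto.
Qed.

Section Ext.
Variable alpha : nat -> C.
Variable d : nat.
Variable T0 : R.
Variable z0 : R -> C.
Hypothesis HT0 : T0 < 0.
Hypothesis Hz0 : solves alpha d (Some T0) (Some 0) z0.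
Hypothesis Hblow : forall M, exists delta, delta > 0 /\ forall t, T0 < t < 0 -> - delta < t -> Cmod (z0 t) > M.

Definition good (lo : option R) (w : R -> C) :=
  solves alpha d lo (Some 0) w /\ (forall t, T0 < t < 0 -> in_int lo (Some 0) t /\ w t = z0 t).
Definition Good t := exists lo w, good lo w /\ in_int lo (Some 0) t.

Lemma good_agree lo1 w1 lo2 w2 : good lo1 w1 -> good lo2 w2 -> forall t, in_int lo1 (Some 0) t -> in_int lo2 (Some 0) t -> w1 t = w2 t.
Proof.
  intros [S1 E1] [S2 E2] t H1 H2.
  assert (Ht0 : T0 < T0 / 2 < 0) by lra.
  apply (uniq alpha d (lmax lo1 lo2) (Some 0) w1 w2) with (t0 := T0 / 2).
  - eapply solves_sub; [exact S1|]. intros s Hs. apply in_int_lmax in Hs. tauto.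
  - eapply solves_sub; [exact S2|]. intros s Hs. apply in_int_lmax in Hs. tauto.
  - apply in_int_lmax. split; [apply E1|apply E2]; auto.
  - rewrite (proj2 (E1 _ Ht0)), (proj2 (E2 _ Ht0)). reflexivity.
  - apply in_int_lmax. auto.
Qed.

Lemma good_z0 : good (Some T0) z0.
Proof. split; [exact Hz0|]. intros t Ht. split; [unfold in_int; lra|reflexivity]. Qed.

Lemma Good_neg t : Good t -> t < 0.
Proof. intros [lo [w [_ [_ H]]]]. exact H. Qed.

Lemma Good_up t t' : Good t -> t <= t' < 0 -> Good t'.
Proof. intros [lo [w [G H]]] Ht. exists lo, w. split; auto. unfold in_int in *. destruct lo; split; try tauto; lra. Qed.

Lemma Good_below t : Good t -> exists t', t' < t /\ Good t'.
Proof.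
  intros [lo [w [G H]]]. destruct (open_nbhd lo (Some 0) t H) as [e [He Hn]].
  exists (t - e/2). split; [lra|]. exists lo, w. split; auto. apply Hn. lra.
Qed.

Definition pick t : R -> C :=
  match excluded_middle_informative (Good t) with
  | left H => snd (proj1_sig (constructive_indefinite_description _
       (let (lo, Hw) := H in let (w, Hg) := Hw in ex_intro (fun p : option R * (R -> C) => good (fst p) (snd p) /\ in_int (fst p) (Some 0) t) (lo, w) Hg)))
  | right _ => z0
  end.
Definition zmax t := pick t t.

Lemma zmax_eq t lo w : good lo w -> in_int lo (Some 0) t -> zmax t = w t.
Proof.
  intros G H. unfold zmax, pick. destruct excluded_middle_informative as [HG|HG].
  - destruct (constructive_indefinite_description _ _) as [[lo' w'] [G' H']]. simpl.
    apply (good_agree lo' w' lo w); auto.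
  - exfalso. apply HG. exists lo, w. auto.
Qed.

Lemma bnd_of (Hb : exists B, forall t, Good t -> B <= t) : bound (fun x => Good (-x)).
Proof. destruct Hb as [B HB]. exists (- B). intros x Hx. specialize (HB _ Hx). lra. Qed.
Lemma ne_good : exists x, Good (- x).
Proof. exists (- (T0 / 2)). rewrite Ropp_involutive. exists (Some T0), z0. split; [apply good_z0|]. unfold in_int; lra. Qed.

Definition lostar : option R :=
  match excluded_middle_informative (exists B, forall t, Good t -> B <= t) with
  | left Hb => Some (- proj1_sig (completeness _ (bnd_of Hb) ne_good))
  | right _ => None
  end.

Lemma lostar_char t : in_int lostar (Some 0) t <-> Good t.
Proof.
  unfold lostar. destruct excluded_middle_informative as [Hb|Hb].
  - destruct (completeness _ (bnd_of Hb) ne_good) as [Mx [Hub Hl]]. simpl. split.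
    + intros [H1 H2]. apply NNPP. intros HG.
      assert (is_upper_bound (fun x => Good (- x)) (- t)).
      { intros x Hx. destruct (Rle_dec (- x) t) as [Hle|Hgt].
        - exfalso. apply HG. apply (Good_up (- x)); auto.
        - lra. }
      specialize (Hl _ H). lra.
    + intros HG. split; [|apply Good_neg; auto].
      destruct (Good_below t HG) as [t' [Ht' HG']]. assert (Good (- - t')) by (rewrite Ropp_involutive; auto).
      specialize (Hub _ H). lra.
  - simpl. split.
    + intros [_ Ht]. apply NNPP. intros HG. apply Hb. exists t. intros t' Ht'.
      destruct (Rle_dec t t'); auto. exfalso. apply HG. apply (Good_up t'); auto. lra.
    + intros HG. split; auto. apply Good_neg; auto.
Qed.

Theorem maximal_ext : exists lo z, maximal_solution (cpoly alpha d) lo (Some 0) z /\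
  (forall t, T0 < t < 0 -> in_int lo (Some 0) t /\ z t = z0 t).
Proof.
  exists lostar, zmax.
  assert (Hz : forall t, T0 < t < 0 -> in_int lostar (Some 0) t /\ zmax t = z0 t).
  { intros t Ht. split.
    - apply lostar_char. exists (Some T0), z0. split; [apply good_z0|]. unfold in_int; lra.
    - apply zmax_eq with (Some T0); [apply good_z0|]. unfold in_int; lra. }
  split; [|exact Hz]. split.
  - split. { exists (T0 / 2). apply Hz. lra. }
    intros t Ht. apply lostar_char in Ht. destruct Ht as [lo [w [G Hin]]].
    destruct (open_nbhd lo (Some 0) t Hin) as [e [He Hn]].
    assert (Eq : forall s, t - e < s < t + e -> w s = zmax s) by (intros s Hs; symmetry; apply (zmax_eq s lo w G); auto).
    destruct (proj1 G t Hin) as [D1 D2]. rewrite <- (Eq t) by lra.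
    split; eapply dpl_ext_loc; eauto; intros s Hs; simpl; rewrite Eq; auto.
  - intros lo'' hi'' w'' [_ Sw] Hsub Heq.
    assert (Heq0 : forall t, T0 < t < 0 -> w'' t = z0 t).
    { intros t Ht. rewrite Heq by (apply Hz; auto). apply Hz; auto. }
    assert (Hin0 : forall t, T0 < t < 0 -> in_int lo'' hi'' t) by (intros t Ht; apply Hsub, Hz; auto).
    assert (N0 : ~ in_int lo'' hi'' 0).
    { intros H0. destruct (Sw 0 H0) as [A1 A2].
      apply dpl_cont in A1. apply dpl_cont in A2.
      destruct (A1 1 ltac:(lra)) as [d1 [Hd1 Hd1']]. destruct (A2 1 ltac:(lra)) as [d2 [Hd2 Hd2']].
      destruct (Hblow (Rabs (fst (w'' 0)) + Rabs (snd (w'' 0)) + 2)) as [d3 [Hd3 Hd3']].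
      set (s := Rmax (Rmax T0 (- d1)) (Rmax (- d2) (- d3)) / 2).
      assert (Hs1 : T0 < s < 0).
      { unfold s. pose proof (Rmax_l (Rmax T0 (- d1)) (Rmax (- d2) (- d3))). pose proof (Rmax_l T0 (-d1)).
        pose proof (Rmax_r T0 (-d1)). pose proof (Rmax_l (-d2) (-d3)). pose proof (Rmax_r (-d2) (-d3)).
        pose proof (Rmax_r (Rmax T0 (- d1)) (Rmax (- d2) (- d3))).
        assert (Rmax (Rmax T0 (- d1)) (Rmax (- d2) (- d3)) < 0).
        { apply Rmax_lub_lt; apply Rmax_lub_lt; lra. }
        lra. }
      assert (Hsd : - d1 < s /\ - d2 < s /\ - d3 < s).
      { unfold s. pose proof (Rmax_l (Rmax T0 (- d1)) (Rmax (- d2) (- d3))). pose proof (Rmax_l T0 (-d1)).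
        pose proof (Rmax_r T0 (-d1)). pose proof (Rmax_l (-d2) (-d3)). pose proof (Rmax_r (-d2) (-d3)).
        pose proof (Rmax_r (Rmax T0 (- d1)) (Rmax (- d2) (- d3))).
        assert (Rmax (Rmax T0 (- d1)) (Rmax (- d2) (- d3)) < 0).
        { apply Rmax_lub_lt; apply Rmax_lub_lt; lra. }
        lra. }
      specialize (Hd3' s Hs1 ltac:(lra)). rewrite <- Heq0 in Hd3' by auto.
      assert (R1 : Rabs (fst (w'' s) - fst (w'' 0)) < 1).
      { apply (Hd1' s). split. { unfold D_x, no_cond; split; auto; lra. } simpl. unfold Rdist. rewrite Rabs_left; lra. }
      assert (R2 : Rabs (snd (w'' s) - snd (w'' 0)) < 1).
      { apply (Hd2' s). split. { unfold D_x, no_cond; split; auto; lra. } simpl. unfold Rdist. rewrite Rabs_left; lra. }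
      pose proof (Cmod_le_sum (w'' s)).
      pose proof (Rabs_triang_inv (fst (w'' s)) (fst (w'' 0))). pose proof (Rabs_triang_inv (snd (w'' s)) (snd (w'' 0))).
      lra. }
    assert (Hneg : forall t, in_int lo'' hi'' t -> t < 0).
    { intros t Ht. destruct (Rlt_dec t 0) as [|Hge]; auto. exfalso. apply N0.
      apply (in_int_convex lo'' hi'' (T0/2) t); auto. apply Hin0; lra. lra. }
    assert (Hgood : good lo'' w'').
    { split.
      - eapply solves_sub; [exact Sw|]. intros t [Ht1 Ht2].
        assert (Hh : in_int lo'' hi'' (T0/2)) by (apply Hin0; lra).
        destruct hi'' as [h|].
        + split; auto. simpl. destruct (Rlt_dec t h); auto. exfalso.
          set (s := Rmax T0 h / 2 + 0).
          assert (Rmax T0 h < 0) by (apply Rmax_lub_lt; lra).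
          pose proof (Rmax_l T0 h). pose proof (Rmax_r T0 h).
          assert (Hs : in_int lo'' (Some h) (Rmax T0 h / 2)) by (apply Hin0; lra).
          destruct Hs as [_ Hs]. simpl in Hs. lra.
        + split; auto.
      - intros t Ht. split.
        + destruct (Hin0 t Ht) as [A _]. unfold in_int. split; [exact A|lra].
        + apply Heq0; auto. }
    intros t Ht. apply lostar_char. exists lo'', w''. split; auto.
    destruct (Ht) as [A _]. unfold in_int. split; [exact A|]. apply Hneg; auto.
Qed.
End Ext.

Lemma pos_case alpha d p1 p2 a : (2 <= d)%nat -> cnorm (p1, p2) = 1 ->
  Pd alpha d p1 p2 = a * p1 -> Qd alpha d p1 p2 = a * p2 -> a > 0 ->
  exists lo tmax z, maximal_solution (cpoly alpha d) lo (Some tmax) z /\ diverges_left_of lo tmax z (p1, p2).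
Proof.
  intros Hd Hn HP HQ Ha.
  destruct d as [|[|m]]; [lia|lia|].
  set (P := (p1, p2) : C).
  assert (HPm : Cmod P = 1) by exact Hn.
  assert (Hlead : (alpha (S (S m)) * P^(S (S m)) = RtoC a * P)%C).
  { apply pair_eq.
    - change (Pd alpha (S (S m)) p1 p2 = fst (RtoC a * P)%C). rewrite HP. simpl. ring.
    - change (Qd alpha (S (S m)) p1 p2 = snd (RtoC a * P)%C). rewrite HQ. simpl. ring. }
  destruct (local_sol alpha m P a Ha HPm Hlead) as [T0 [Z [HT0 [Hode [Hblow Hdir]]]]].
  destruct (maximal_ext alpha (S (S m)) T0 Z HT0) as [lo [z [Hmax Hz]]].
  - intros t Ht. apply Hode. unfold in_int in Ht. lra.
  - exact Hblow.
  - exists lo, 0, z. split; auto. split.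
    + intros M. destruct (Hblow M) as [dl [Hdl Hb]]. exists (Rmin dl (- T0)). split.
      { apply Rmin_glb_lt; lra. }
      intros t Ht Htd. pose proof (Rmin_l dl (- T0)). pose proof (Rmin_r dl (- T0)).
      destruct Ht as [_ Ht]. simpl in Ht. assert (T0 < t < 0) by lra.
      rewrite (proj2 (Hz t H1)). apply Hb; auto. lra.
    + intros e He. destruct (Hdir e He) as [dl [Hdl Hb]]. exists (Rmin dl (- T0)). split.
      { apply Rmin_glb_lt; lra. }
      intros t Ht Htd. pose proof (Rmin_l dl (- T0)). pose proof (Rmin_r dl (- T0)).
      destruct Ht as [_ Ht]. simpl in Ht. assert (T0 < t < 0) by lra.
      rewrite (proj2 (Hz t H1)). apply Hb; auto. lra.
Qed.

Definition oneg (o : option R) := match o with Some x => Some (- x) | None => None end.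

Lemma in_int_neg lo hi t : in_int lo hi (- t) <-> in_int (oneg hi) (oneg lo) t.
Proof. destruct lo, hi; unfold in_int; simpl; intuition lra. Qed.

Lemma in_int_neg1 lo hi t : in_int lo hi (- t) -> in_int (oneg hi) (oneg lo) t.
Proof. apply in_int_neg. Qed.
Lemma in_int_neg2 lo hi t : in_int (oneg hi) (oneg lo) t -> in_int lo hi (- t).
Proof. apply in_int_neg. Qed.
Lemma in_int_neg3 lo hi t : in_int lo hi t -> in_int (oneg hi) (oneg lo) (- t).
Proof. intros H. apply in_int_neg1. rewrite Ropp_involutive. auto. Qed.
Lemma in_int_neg4 lo hi t : in_int (oneg hi) (oneg lo) (- t) -> in_int lo hi t.
Proof. intros H. rewrite <- (Ropp_involutive t). apply in_int_neg2. auto. Qed.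

Lemma dpl_neg (f : R -> R) t l : derivable_pt_lim f (- t) l -> derivable_pt_lim (fun s => f (- s)) t (- l).
Proof.
  intros H. apply is_derive_Reals. apply is_derive_Reals in H.
  assert (Dn : is_derive (fun s : R => - s) t (-1)).
  { apply (Dext (fun s => 0 - s) _ t (0 - 1)). intros; ring. ring. apply Dmn; [apply Dk|apply Did]. }
  assert (A := Dc f (fun s => - s) t l (-1) H Dn). eapply Dext; [intros; reflexivity| |exact A]. ring.
Qed.

Lemma sol_neg (F : Cx -> Cx) lo hi z : is_solution F lo hi z ->
  is_solution (fun w => Copp (F w)) (oneg hi) (oneg lo) (fun t => z (- t)).
Proof.
  intros [[t0 H0] H]. split.
  - exists (- t0). apply in_int_neg3. auto.
  - intros t Ht. apply in_int_neg2 in Ht. destruct (H _ Ht) as [A B]. split; [exact (dpl_neg (fun s => fst (z s)) t _ A)|exact (dpl_neg (fun s => snd (z s)) t _ B)].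
Qed.

Lemma Fneg2 (F : Cx -> Cx) : (fun w => Copp (Copp (F w))) = F.
Proof. apply functional_extensionality. intros w. destruct (F w). unfold Copp; simpl. f_equal; ring. Qed.

Lemma max_neg (F : Cx -> Cx) lo hi z : maximal_solution F lo hi z ->
  maximal_solution (fun w => Copp (F w)) (oneg hi) (oneg lo) (fun t => z (- t)).
Proof.
  intros [Hs Hm]. split; [apply sol_neg; auto|].
  intros lo' hi' w Hw Hsub Heq t Ht.
  assert (Hw' := sol_neg _ _ _ _ Hw). cbv beta in Hw'. rewrite (Fneg2 F) in Hw'.
  apply in_int_neg1. apply (Hm _ _ _ Hw').
  - intros s Hs'. apply in_int_neg1. apply Hsub. apply in_int_neg3. auto.
  - intros s Hs'. rewrite Heq. rewrite Ropp_involutive. reflexivity. apply in_int_neg3. auto.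
  - apply in_int_neg3. auto.
Qed.

Lemma div_neg lo tmax z p : diverges_left_of lo tmax z p -> diverges_right_of (- tmax) (oneg lo) (fun t => z (- t)) p.
Proof.
  intros [H1 H2]. split.
  - intros M. destruct (H1 M) as [dl [Hd Hb]]. exists dl. split; auto. intros t Ht Htd. apply Hb; [|lra].
    apply (in_int_neg2 lo (Some tmax) t). exact Ht.
  - intros e He. destruct (H2 e He) as [dl [Hd Hb]]. exists dl. split; auto. intros t Ht Htd. apply Hb; [|lra].
    apply (in_int_neg2 lo (Some tmax) t). exact Ht.
Qed.

Lemma cpoly_neg alpha d w : cpoly (fun k => Copp (alpha k)) d w = Copp (cpoly alpha d w).
Proof. induction d. reflexivity. rewrite !cpoly_S, IHd. change Cx with C. ring. Qed.

Theorem mainTheorem3 (alpha : nat -> Cx) (d : nat) (p1 p2 a : R) :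
  (2 <= d)%nat ->
  alpha d <> (0, 0) ->
  cnorm (p1, p2) = 1 ->
  p1 * Qd alpha d p1 p2 - p2 * Pd alpha d p1 p2 = 0 ->
  Pd alpha d p1 p2 = a * p1 ->
  Qd alpha d p1 p2 = a * p2 ->
  a <> 0 /\
  (a > 0 -> exists (lo : option R) (tmax : R) (z : R -> Cx),
      maximal_solution (cpoly alpha d) lo (Some tmax) z /\
      diverges_left_of lo tmax z (p1, p2)) /\
  (a < 0 -> exists (tmin : R) (hi : option R) (z : R -> Cx),
      maximal_solution (cpoly alpha d) (Some tmin) hi z /\
      diverges_right_of tmin hi z (p1, p2)).
Proof.
  intros Hd Ha0 Hn _ HP HQ.
  split; [|split].
  - intros ->. apply Ha0.
    assert (E : (alpha d * (p1, p2)^d)%C = RtoC 0).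
    { apply pair_eq. change (Pd alpha d p1 p2 = 0). rewrite HP; ring. change (Qd alpha d p1 p2 = 0). rewrite HQ; ring. }
    assert (Cmod (alpha d) = 0).
    { apply (f_equal Cmod) in E. rewrite Cmod_mult, Cmod_pow, Cmod_0 in E. change (Cmod (p1, p2)) with (cnorm (p1,p2)) in E.
      rewrite Hn, pow1 in E. lra. }
    apply Cmod_eq_0 in H. exact H.
  - intros Ha. apply (pos_case alpha d p1 p2 a); auto.
  - intros Ha.
    destruct (pos_case (fun k => Copp (alpha k)) d p1 p2 (- a)) as [lo [tm [z [Hm Hdv]]]]; auto.
    + unfold Pd in *. simpl in *. lra.
    + unfold Qd in *. simpl in *. lra.
    + lra.
    + exists (- tm), (oneg lo), (fun t => z (- t)). split.
      * assert (Hm' := max_neg _ _ _ _ Hm).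
        replace (fun w => Copp (cpoly (fun k => Copp (alpha k)) d w)) with (cpoly alpha d) in Hm'.
        exact Hm'. apply functional_extensionality. intros w. rewrite cpoly_neg.
        destruct (cpoly alpha d w). unfold Copp; simpl. f_equal; ring.
      * apply div_neg. exact Hdv.
Qed.
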